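(* For $i=1,2$ let $F_i$ be a field of characteristic different from $2$, let $a_i\in F_i^\times\setminus F_i^{\times 2}$, $K_i=F_i(\sqrt{a_i})$, $G_i=\mathrm{Gal}(K_i/F_i)$, and $T_i=K_i^\times/K_i^{\times 2}$. Let $G$ be a group of order $2$ and regard each $T_i$ as an $\mathbb{F}_2[G]$-module via the isomorphism $G\to G_i$. Let $\Upsilon(K_i)=1$ if $-1\in N(K_i^\times)$ and $\Upsilon(K_i)=0$ otherwise. Then $T_1\cong T_2$ as $\mathbb{F}_2[G]$-modules if and only if both of the following hold: (1) $2\Upsilon(K_1)+\dim_{\mathbb{F}_2}F_1^\times/N(K_1^\times) = 2\Upsilon(K_2)+\dim_{\mathbb{F}_2}F_2^\times/N(K_2^\times)$; (2) $\Upsilon(K_2)+\dim_{\mathbb{F}_2}N(K_1^\times)/F_1^{\times 2} = \Upsilon(K_1)+\dim_{\mathbb{F}_2}N(K_2^\times)/F_2^{\times 2}$.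
   Context: $N(K_i^\times)\subseteq F_i^\times$ denotes the group of norms from $K_i$ to $F_i$; it contains $F_i^{\times 2}$. Dimensions are as $\mathbb{F}_2$-vector spaces (cardinal numbers). *)

(* Defs.v *)
From mathcomp Require Import all_boot all_algebra.
From Stdlib Require Import ClassicalEpsilon.
Set Implicit Arguments. Unset Strict Implicit. Unset Printing Implicit Defensive.
Import GRing.Theory.
Local Open Scope ring_scope.

Definition units_of (F : fieldType) (c : F) : Prop := c != 0.

Definition squares_of (F : fieldType) (c : F) : Prop :=
  exists y : F, y != 0 /\ c = y ^+ 2.

Definition norms_of (F K : fieldType) (i : F -> K) (s : K -> K) (c : F) : Prop :=
  exists x : K, x != 0 /\ i c = x * s x.

Definition is_quad_ext (F K : fieldType) (i : {rmorphism F -> K}) (a : F) (r : K) : Prop :=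
  r ^+ 2 = i a /\ forall x : K, exists u v : F, x = i u + i v * r.

Definition is_gal_generator (F K : fieldType) (i : {rmorphism F -> K})
  (s : {rmorphism K -> K}) : Prop :=
  bijective s /\ (forall c : F, s (i c) = i c) /\ exists x : K, s x != x.

Definition Upsilon (F K : fieldType) (i : F -> K) (s : K -> K) : nat :=
  if excluded_middle_informative (norms_of i s (-1)) then 1%N else 0%N.

(* B is (the image of) an F_2-basis of the elementary abelian 2-group S/H,
   where H <= S <= F^x (written multiplicatively): B is a subset of S such that
   no nonempty product of distinct elements of B lies in H, and every element of
   S is congruent mod H to a finite product of elements of B. *)
Definition qbasis (F : fieldType) (S H B : F -> Prop) : Prop :=
  (forall x, B x -> S x) /\
  (forall s : seq F, uniq s -> (forall x, x \in s -> B x) ->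
      H (\prod_(x <- s) x) -> s = [::]) /\
  (forall y, S y -> exists s : seq F, (forall x, x \in s -> B x) /\
      H (y / \prod_(x <- s) x)).

(* The cardinal equality  n1 + dim_F2 (S1/H1) = n2 + dim_F2 (S2/H2). *)
Definition dim_plus_eq (F1 F2 : fieldType) (n1 : nat) (S1 H1 : F1 -> Prop)
  (n2 : nat) (S2 H2 : F2 -> Prop) : Prop :=
  exists (B1 : F1 -> Prop) (B2 : F2 -> Prop),
    qbasis S1 H1 B1 /\ qbasis S2 H2 B2 /\
    exists f : ('I_n1 + {x : F1 | B1 x})%type -> ('I_n2 + {x : F2 | B2 x})%type,
      bijective f.

Definition sq_equiv (K : fieldType) (x y : K) : Prop :=
  exists z : K, z != 0 /\ x = y * z ^+ 2.

(* T1 = K1^x/K1^{x2} and T2 = K2^x/K2^{x2} are isomorphic F_2[G]-modules,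
   the generator of G acting by s1 resp. s2.  The isomorphism is given on
   representatives: phi induces a well-defined group homomorphism
   T1 -> T2 (multiplicative mod squares), which is G-equivariant, injective
   (trivial kernel) and surjective. *)
Definition T_iso (K1 K2 : fieldType) (s1 : K1 -> K1) (s2 : K2 -> K2) : Prop :=
  exists phi : K1 -> K2,
    (forall x, x != 0 -> phi x != 0) /\
    (forall x y, x != 0 -> y != 0 -> sq_equiv (phi (x * y)) (phi x * phi y)) /\
    (forall x, x != 0 -> sq_equiv (phi (s1 x)) (s2 (phi x))) /\
    (forall x, x != 0 -> sq_equiv (phi x) 1 -> sq_equiv x 1) /\
    (forall y, y != 0 -> exists x, x != 0 /\ sq_equiv (phi x) y).

(* Main.v *)
Require Import Defs.
From mathcomp Require Import all_boot all_algebra ring.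
From Stdlib Require Import ClassicalEpsilon ProofIrrelevance.
From mathcomp Require classical_sets boolp.
Set Implicit Arguments. Unset Strict Implicit. Unset Printing Implicit Defensive.
Import GRing.Theory.
Local Open Scope ring_scope.

Section Space.
Variable F : fieldType.

Definition subgrp (P : F -> Prop) :=
  [/\ P 1, (forall x y, P x -> P y -> P (x * y)),
      (forall x, P x -> P x^-1) & (forall x, P x -> x != 0)].

Definition esp (S H : F -> Prop) :=
  [/\ subgrp S, subgrp H, (forall x, H x -> S x) & (forall x, S x -> H (x * x))].

Lemma sg1 P : subgrp P -> P 1. Proof. by case. Qed.
Lemma sgM P : subgrp P -> forall x y, P x -> P y -> P (x * y). Proof. by case. Qed.
Lemma sgV P : subgrp P -> forall x, P x -> P x^-1. Proof. by case. Qed.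
Lemma sg0 P : subgrp P -> forall x, P x -> x != 0. Proof. by case. Qed.
Lemma sgD P : subgrp P -> forall x y, P x -> P y -> P (x / y).
Proof. by move=> sP x y Px Py; apply: sgM => //; apply: sgV. Qed.
Lemma sgprod P (T : eqType) (s : seq T) (h : T -> F) : subgrp P ->
  (forall x, x \in s -> P (h x)) -> P (\prod_(x <- s) h x).
Proof.
move=> sP; elim: s => [|y s IH] hs; first by rewrite big_nil; apply: sg1.
rewrite big_cons; apply: sgM => //; first by apply: hs; rewrite inE eqxx.
by apply: IH => x xs; apply: hs; rewrite inE xs orbT.
Qed.

Variables (S H : F -> Prop).
Hypothesis E : esp S H.

Lemma sgS : subgrp S. Proof. by case: E. Qed.
Lemma sgH : subgrp H. Proof. by case: E. Qed.
Lemma HS x : H x -> S x. Proof. by case: E => _ _ h _; apply: h. Qed.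
Lemma Hsq x : S x -> H (x * x). Proof. by case: E => _ _ _ h; apply: h. Qed.
Lemma S0 x : S x -> x != 0. Proof. exact: (sg0 sgS). Qed.

Lemma Hrefl x : S x -> H (x / x).
Proof. by move=> Sx; rewrite divff ?S0 //; apply: (sg1 sgH). Qed.

Lemma Htrans x y z : S y -> H (x / y) -> H (y / z) -> H (x / z).
Proof.
move=> Sy h1 h2; have := sgM sgH h1 h2.
by rewrite mulrA mulfVK ?S0.
Qed.

Lemma Hsym x y : H (x / y) -> H (y / x).
Proof. by move=> h; rewrite -invf_div; apply: (sgV sgH). Qed.

Lemma HMM x y x' y' : H (x / x') -> H (y / y') -> H ((x * y) / (x' * y')).
Proof.
move=> h1 h2; have := sgM sgH h1 h2.
by rewrite invfM mulrACA.
Qed.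

Lemma Hinvsq x : S x -> H (x^-1 / x).
Proof. by move=> Sx; rewrite -invfM; apply: (sgV sgH); apply: Hsq. Qed.


Lemma Hsq2 x : S x -> H (x ^+ 2).
Proof. by move=> Sx; rewrite expr2; apply: Hsq. Qed.

Lemma uniq_rep (B : F -> Prop) (s : seq F) : (forall x, B x -> S x) ->
  (forall x, x \in s -> B x) ->
  exists t, [/\ uniq t, (forall x, x \in t -> B x) & H (\prod_(x <- s) x / \prod_(x <- t) x)].
Proof.
move=> BS; elim: s => [|y s IH] hs.
  by exists [::]; split => //; rewrite !big_nil divr1; apply: (sg1 sgH).
have [t [ut tB ht]] : exists t, [/\ uniq t, (forall x, x \in t -> B x) & H (\prod_(x <- s) x / \prod_(x <- t) x)].
  by apply: IH => x xs; apply: hs; rewrite inE xs orbT.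
have By : B y by apply: hs; rewrite inE eqxx.
have Sy := BS _ By.
have St : S (\prod_(x <- t) x) by apply: (sgprod sgS) => x /tB /BS.
case yt: (y \in t).
  exists (rem y t); split.
  - exact: rem_uniq.
  - by move=> x /mem_rem /tB.
  rewrite big_cons.
  have h2 : H ((y * \prod_(x <- s) x) / (y * \prod_(x <- t) x)).
    by apply: HMM => //; apply: Hrefl.
  apply: Htrans h2 _.
    by apply: (sgM sgS) => //.
  rewrite (perm_big _ (perm_to_rem yt)) big_cons /=.
  have -> : y * (y * \prod_(j <- rem y t) j) / \prod_(j <- rem y t) j = y * y.
    rewrite -mulrA mulfK //; apply: (S0).
    by apply: (sgprod sgS) => x /mem_rem /tB /BS.
  exact: Hsq.
exists (y :: t); split.
- by rewrite /= yt ut.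
- by move=> x; rewrite inE => /orP[/eqP -> //|/tB].
by rewrite !big_cons; apply: HMM => //; apply: Hrefl.
Qed.

Definition indep (B : F -> Prop) :=
  forall s : seq F, uniq s -> (forall x, x \in s -> B x) ->
      H (\prod_(x <- s) x) -> s = [::].

Lemma qbasis_indep B : qbasis S H B -> indep B. Proof. by case=> _ []. Qed.
Lemma qbasis_sub B : qbasis S H B -> forall x, B x -> S x. Proof. by case. Qed.

Lemma span_uniq B y : qbasis S H B -> S y ->
  exists t, [/\ uniq t, (forall x, x \in t -> B x) & H (y / \prod_(x <- t) x)].
Proof.
move=> [BS [_ sp]] Sy; have [s [sB hs]] := sp _ Sy.
have [t [ut tB ht]] := uniq_rep BS sB.
exists t; split => //; apply: Htrans hs ht.
by apply: (sgprod sgS) => x /sB /BS.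
Qed.

End Space.

Definition symd (T : eqType) (s t : seq T) :=
  [seq x <- s | x \notin t] ++ [seq x <- t | x \notin s].

Lemma symd_uniq (T : eqType) (s t : seq T) : uniq s -> uniq t -> uniq (symd s t).
Proof.
move=> us ut; rewrite cat_uniq !filter_uniq //= andbT.
apply/hasPn => x; rewrite !mem_filter => /andP[xs _].
by rewrite (negbTE xs) andbF.
Qed.

Lemma symd_mem (T : eqType) (s t : seq T) x :
  x \in symd s t -> (x \in s) || (x \in t).
Proof. by rewrite mem_cat !mem_filter => /orP[/andP[_ ->]|/andP[_ ->]]; rewrite ?orbT. Qed.

Lemma symd_prod (F : fieldType) (T : eqType) (h : T -> F) (s t : seq T) :
  uniq s -> uniq t ->
  \prod_(x <- s) h x * \prod_(x <- t) h x =
  (\prod_(x <- [seq x <- s | x \in t]) h x) ^+ 2 * \prod_(x <- symd s t) h x.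
Proof.
move=> us ut.
have e1 : \prod_(x <- s) h x = \prod_(x <- [seq x <- s | x \in t]) h x * \prod_(x <- [seq x <- s | x \notin t]) h x.
  by rewrite !big_filter; exact: (bigID (fun x => x \in t)).
have e2 : \prod_(x <- t) h x = \prod_(x <- [seq x <- t | x \in s]) h x * \prod_(x <- [seq x <- t | x \notin s]) h x.
  by rewrite !big_filter; exact: (bigID (fun x => x \in s)).
have pe : perm_eq [seq x <- t | x \in s] [seq x <- s | x \in t].
  apply: uniq_perm; rewrite ?filter_uniq // => x.
  by rewrite !mem_filter andbC.
rewrite e1 e2 (perm_big _ pe) /symd big_cat /= expr2.
move: (\prod_(x <- [seq x <- s | x \in t]) h x) => A.
move: (\prod_(x <- [seq x <- s | x \notin t]) h x) => B.
move: (\prod_(x <- [seq x <- t | x \notin s]) h x) => C.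
by rewrite mulrACA.
Qed.

Section Space2.
Variables (F : fieldType) (S H : F -> Prop).
Hypothesis E : esp S H.

Lemma Sprod B u : (forall x, B x -> S x) -> (forall x, x \in u -> B x) -> S (\prod_(x <- u) x).
Proof. by move=> BS uB; apply: (sgprod (sgS E)) => x /uB /BS. Qed.

Lemma uniq_repr B s t : qbasis S H B -> uniq s -> uniq t ->
  (forall x, x \in s -> B x) -> (forall x, x \in t -> B x) ->
  H (\prod_(x <- s) x / \prod_(x <- t) x) -> perm_eq s t.
Proof.
move=> qB us ut sB tB hst.
have BS := qbasis_sub qB.
have Ss := Sprod BS sB; have St := Sprod BS tB.
have SI : S (\prod_(x <- [seq x <- s | x \in t]) x).
  by apply: (Sprod BS) => x; rewrite mem_filter => /andP[_ /sB].
have hD : H (\prod_(x <- symd s t) x).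
  have e := symd_prod (fun x => x) us ut.
  have I0 : (\prod_(x <- [seq x <- s | x \in t]) x) ^+ 2 != 0.
    by rewrite expf_neq0 // (S0 E).
  have -> : \prod_(x <- symd s t) x =
      (\prod_(x <- s) x * \prod_(x <- t) x) / (\prod_(x <- [seq x <- s | x \in t]) x) ^+ 2.
    by rewrite e mulrC mulKf.
  apply: (sgD (sgH E)); last exact: (Hsq2 E).
  have -> : \prod_(x <- s) x * \prod_(x <- t) x =
     (\prod_(x <- s) x / \prod_(x <- t) x) * (\prod_(x <- t) x * \prod_(x <- t) x).
    by rewrite mulrA mulfVK // (S0 E).
  by apply: (sgM (sgH E)) => //; apply: (Hsq E).
have D0 : symd s t = [::].
  apply: (qbasis_indep qB (symd_uniq us ut) _ hD) => x /symd_mem /orP[/sB|/tB] //.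
move: D0; rewrite /symd; case f1: [seq x <- s | x \notin t] => [|? ?] //= f2.
apply: uniq_perm => // x; apply/idP/idP => xs.
  apply/negPn/negP => xt.
  have : x \in [seq x <- s | x \notin t] by rewrite mem_filter xt xs.
  by rewrite f1.
apply/negPn/negP => xt.
have : x \in [seq x <- t | x \notin s] by rewrite mem_filter xt xs.
by rewrite f2.
Qed.

Lemma basis_exists : exists B, qbasis S H B.
Proof.
pose T := {B : F -> Prop | indep H B /\ (forall x, B x -> S x)}.
pose R (b c : T) := boolp.asbool (forall x, sval b x -> sval c x).
have t0 : T.
  by exists (fun _ => False); split => // [[|x s]] // _ /(_ x); rewrite inE eqxx => /(_ isT).
have Rrefl : forall t, R t t by move=> t; apply/boolp.asboolP.
have Rtrans : forall r s t, R r s -> R s t -> R r t.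
  move=> r s t /boolp.asboolP h1 /boolp.asboolP h2; apply/boolp.asboolP => x /h1; exact: h2.
have chains : forall A : T -> Prop, classical_sets.total_on A R -> exists t, forall s, A s -> R s t.
  move=> A tot.
  pose U x := exists b, A b /\ sval b x.
  have cov : forall s, (forall x, x \in s -> U x) ->
      s = [::] \/ exists b, A b /\ forall x, x \in s -> sval b x.
    elim=> [|y s IH] hs; first by left.
    right.
    have [b [Ab bY]] : U y by apply: hs; rewrite inE eqxx.
    have h' : forall x, x \in s -> U x by move=> x xs; apply: hs; rewrite inE xs orbT.
    have [->|[c [Ac hc]]] := IH h'.
      by exists b; split => // x; rewrite inE => /eqP ->.
    have [/boolp.asboolP bc|/boolp.asboolP cb] := tot _ _ Ab Ac.
      exists c; split => // x; rewrite inE => /orP[/eqP ->|/hc //]; exact: bc.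
    exists b; split => // x; rewrite inE => /orP[/eqP -> //|/hc]; exact: cb.
  have Ui : indep H U.
    move=> s us sU hs; have [//|[b [Ab hb]]] := cov s sU.
    by case: (svalP b) => ib _; apply: ib.
  have US : forall x, U x -> S x.
    by move=> x [b [_ bx]]; case: (svalP b) => _; apply.
  exists (exist _ U (conj Ui US)) => s As; apply/boolp.asboolP => x sx.
  by exists s.
have [m mmax] := @classical_sets.ZL_preorder T t0 R Rrefl Rtrans chains.
move: mmax; case: m => M [iM MS] mmax.
exists M; split => //; split => // y Sy.
apply: boolp.contrapT => nsp.
pose M' x := M x \/ x = y.
have iM' : indep H M'.
  move=> s us sM hs.
  case ys: (y \in s); last first.
    apply: (iM) => // x xs; case: (sM x xs) => // xy.
    by move: xs; rewrite xy ys.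
  exfalso; apply: nsp; exists (rem y s); split.
    move=> x; rewrite (mem_rem_uniq _ us) => /andP[xy xs].
    by case: (sM x xs) => // /eqP; rewrite (negbTE xy).
  have Sr : S (\prod_(x <- rem y s) x).
    apply: (Sprod MS) => x; rewrite (mem_rem_uniq _ us) => /andP[xy xs].
    by case: (sM x xs) => // /eqP; rewrite (negbTE xy).
  move: hs; rewrite (perm_big _ (perm_to_rem ys)) big_cons => hs.
  have -> : y / \prod_(x <- rem y s) x =
      (y * \prod_(x <- rem y s) x) / (\prod_(x <- rem y s) x * \prod_(x <- rem y s) x).
    by rewrite invfM mulrA mulfK // (S0 E).
  by apply: (sgD (sgH E)) => //; apply: (Hsq E).
have M'S : forall x, M' x -> S x by move=> x [/MS //|->].
have := mmax (exist _ M' (conj iM' M'S)).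
have Rm : R (exist _ M (conj iM MS)) (exist _ M' (conj iM' M'S)).
  by apply/boolp.asboolP => x /= Mx; left.
move=> /(_ Rm) /boolp.asboolP /= /(_ y (or_intror erefl)) My.
apply: nsp; exists [:: y]; split; first by move=> x; rewrite inE => /eqP ->.
by rewrite big_seq1; apply: (Hrefl E).
Qed.

End Space2.

Lemma Hprod_cong (F : fieldType) (H : F -> Prop) (T : eqType) (s : seq T) (h1 h2 : T -> F) :
  subgrp H -> (forall x, x \in s -> H (h1 x / h2 x)) ->
  H (\prod_(x <- s) h1 x / \prod_(x <- s) h2 x).
Proof.
move=> sH; elim: s => [|y s IH] hs; first by rewrite !big_nil divr1; apply: sg1.
rewrite !big_cons invfM mulrACA; apply: (sgM sH).
  by apply: hs; rewrite inE eqxx.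
by apply: IH => x xs; apply: hs; rewrite inE xs orbT.
Qed.

Definition img (A B : Type) (f : A -> B) (P : A -> Prop) (y : B) := exists x, P x /\ y = f x.

Lemma seq_img (A B : eqType) (f : A -> B) P (t : seq B) : (forall y, y \in t -> img f P y) ->
  exists u, (forall x, x \in u -> P x) /\ t = map f u.
Proof.
elim: t => [|y t IH] ht; first by exists [::].
have [x [Px ->]] : img f P y by apply: ht; rewrite inE eqxx.
have [u [uP ->]] : exists u, (forall x, x \in u -> P x) /\ t = map f u.
  by apply: IH => z zt; apply: ht; rewrite inE zt orbT.
by exists (x :: u); split => // z; rewrite inE => /orP[/eqP ->|/uP].
Qed.

Lemma perm_eq1 (T : eqType) (x y : T) : perm_eq [:: x] [:: y] -> x = y.
Proof. by move/perm_mem/(_ x); rewrite !inE eqxx => /esym/eqP. Qed.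

Section Qiso.
Variables (F1 F2 : fieldType) (S H : F1 -> Prop) (S' H' : F2 -> Prop).
Hypotheses (E : esp S H) (E' : esp S' H').

Definition qiso (f : F1 -> F2) :=
  [/\ (forall x, S x -> S' (f x)),
      (forall x y, S x -> S y -> H' (f (x * y) / (f x * f y))),
      (forall x, S x -> (H' (f x) <-> H x)) &
      (forall y, S' y -> exists x, S x /\ H' (y / f x))].

Variable f : F1 -> F2.
Hypothesis qf : qiso f.

Lemma qf1 x : S x -> S' (f x). Proof. by case: qf => h _ _ _; apply: h. Qed.
Lemma qf2 x y : S x -> S y -> H' (f (x * y) / (f x * f y)). Proof. by case: qf => _ h _ _; apply: h. Qed.
Lemma qf3 x : S x -> (H' (f x) <-> H x). Proof. by case: qf => _ _ h _; apply: h. Qed.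
Lemma qf4 y : S' y -> exists x, S x /\ H' (y / f x). Proof. by case: qf => _ _ _ h; apply: h. Qed.

Lemma qdiv x y : S x -> S y -> H' (f (x / y) / (f x / f y)).
Proof.
move=> Sx Sy.
have Sxy : S (x / y) by apply: (sgD (sgS E)).
have h := qf2 Sxy Sy; rewrite mulfVK ?(S0 E) // in h.
have h2 := Hsym E' h.
have -> : f (x / y) / (f x / f y) = (f (x / y) * f y) / f x.
  by rewrite invf_div mulrA.
done.
Qed.

Lemma qcong x y : S x -> S y -> H (x / y) -> H' (f x / f y).
Proof.
move=> Sx Sy hxy.
have Sxy : S (x / y) by apply: (sgD (sgS E)).
have := (qf3 Sxy).2 hxy => h1.
have h2 := qdiv Sx Sy.
have := sgD (sgH E') h1 h2.
rewrite invf_div mulrC divfK //.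
by apply: (S0 E'); apply: qf1.
Qed.

Lemma qprod (s : seq F1) : (forall x, x \in s -> S x) ->
  H' (f (\prod_(x <- s) x) / \prod_(x <- s) f x).
Proof.
elim: s => [|y s IH] hs.
  rewrite !big_nil divr1.
  have S1 : S 1 by apply: (sg1 (sgS E)).
  have h := qf2 S1 S1; rewrite mulr1 in h.
  have f10 : f 1 != 0 by apply: (S0 E'); apply: qf1.
  move: h; rewrite invfM mulrA divff // mul1r => h.
  by rewrite -[f 1]invrK; apply: (sgV (sgH E')).
have Sy : S y by apply: hs; rewrite inE eqxx.
have Ss : forall x, x \in s -> S x by move=> x xs; apply: hs; rewrite inE xs orbT.
have Sp : S (\prod_(x <- s) x) by apply: (sgprod (sgS E)).
rewrite !big_cons.
apply: (Htrans E' _ (qf2 Sy Sp)).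
  by apply: (sgM (sgS E')); apply: qf1.
rewrite invfM mulrACA divff ?mul1r; first exact: IH.
by apply: (S0 E'); apply: qf1.
Qed.

Lemma HmulC x y : S' y -> H' (x / y) -> H' y -> H' x.
Proof. by move=> Sy h1 h2; have := sgM (sgH E') h1 h2; rewrite divfK ?(S0 E'). Qed.

Lemma tr_img B : qbasis S H B ->
  qbasis S' H' (img f B) /\ (forall x y, B x -> B y -> f x = f y -> x = y).
Proof.
move=> qB; have BS := qbasis_sub qB.
split; last first.
  move=> b1 b2 B1 B2 e.
  have h := qdiv (BS _ B1) (BS _ B2).
  rewrite e (divff (S0 E' (qf1 (BS _ B2)))) divr1 in h.
  have h2 := (qf3 (sgD (sgS E) (BS _ B1) (BS _ B2))).1 h.
  apply: perm_eq1; apply: (uniq_repr E qB) => //.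
  - by move=> x; rewrite inE => /eqP ->.
  - by move=> x; rewrite inE => /eqP ->.
  by rewrite !big_seq1.
split.
  by move=> y [x [Bx ->]]; apply: qf1; apply: BS.
split.
  move=> t ut tI hs.
  have [u [uB tu]] := seq_img tI.
  have Su : forall x, x \in u -> S x by move=> x /uB /BS.
  move: hs; rewrite tu big_map => hs.
  have h := qprod Su.
  have Sp : S (\prod_(x <- u) x) by apply: (sgprod (sgS E)).
  have := (qf3 Sp).1 (HmulC (sgprod (sgS E') (fun x xu => qf1 (Su x xu))) h hs).
  move=> hu.
  have uu : uniq u by move: ut; rewrite tu => /map_uniq.
  by rewrite (qbasis_indep qB uu uB hu).
move=> y Sy; have [x [Sx hy]] := qf4 Sy.
case: qB => _ [_ sp]; have [u [uB hu]] := sp x Sx.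
have Su : forall x, x \in u -> S x by move=> z /uB /BS.
have Sp : S (\prod_(x <- u) x) by apply: (sgprod (sgS E)).
exists (map f u); split.
  by move=> z /mapP[w wu ->]; exists w; split => //; apply: uB.
rewrite big_map.
apply: (Htrans E' _ hy); first by apply: qf1.
apply: (Htrans E' _ (qcong Sx Sp hu)); first by apply: qf1.
exact: qprod.
Qed.

Lemma tr_pre B' : qbasis S' H' B' -> exists g : F2 -> F1,
  [/\ qbasis S H (img g B'), (forall x y, B' x -> B' y -> g x = g y -> x = y) &
      forall y, B' y -> S (g y) /\ H' (y / f (g y))].
Proof.
move=> qB; have BS := qbasis_sub qB.
pose g y := epsilon (inhabits 0) (fun x => S x /\ H' (y / f x)).
have gP : forall y, S' y -> S (g y) /\ H' (y / f (g y)).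
  by move=> y Sy; apply: (epsilon_spec (inhabits 0) (fun x => S x /\ H' (y / f x))); apply: qf4.
exists g; split; last by move=> y /BS /gP.
- split.
    by move=> x [y [By ->]]; case: (gP _ (BS _ By)).
  split.
    move=> t ut tI hs.
    have [u [uB tu]] := seq_img tI.
    have Sgu : forall x, x \in map g u -> S x.
      by move=> z /mapP[w /uB /BS /gP [h _] ->].
    have h1 := qprod Sgu.
    have Sp : S (\prod_(x <- map g u) x) by apply: (sgprod (sgS E)).
    have h2 : H' (f (\prod_(x <- map g u) x)) by apply/(qf3 Sp); rewrite -tu.
    have h3 : H' (\prod_(y <- u) y / \prod_(y <- u) f (g y)).
      by apply: (Hprod_cong (sgH E')) => y /uB /BS /gP [].
    rewrite !big_map in h1.
    have Sq : S' (\prod_(y <- u) f (g y)).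
      by apply: (sgprod (sgS E')) => y /uB /BS /gP [h _]; apply: qf1.
    have SX : S' (f (\prod_(y <- u) g y)).
      by apply: qf1; apply: (sgprod (sgS E)) => y /uB /BS /gP [].
    have h4 := Htrans E' Sq h3 (Hsym E' h1).
    have h5 : H' (\prod_(y <- u) y).
      by apply: (HmulC SX h4); rewrite !big_map in h2.
    have uu : uniq u by move: ut; rewrite tu => /map_uniq.
    by rewrite tu (qbasis_indep qB uu uB h5).
  move=> x Sx.
  case: qB => _ [_ sp]; have [u [uB hu]] := sp (f x) (qf1 Sx).
  exists (map g u); split.
    by move=> z /mapP[w wu ->]; exists w; split => //; apply: uB.
  have Sgu : forall x, x \in map g u -> S x.
    by move=> z /mapP[w /uB /BS /gP [h _] ->].
  have Sp : S (\prod_(x <- map g u) x) by apply: (sgprod (sgS E)).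
  have h1 := qprod Sgu; rewrite !big_map in h1.
  have h3 : H' (\prod_(y <- u) y / \prod_(y <- u) f (g y)).
    by apply: (Hprod_cong (sgH E')) => y /uB /BS /gP [].
  have Su : S' (\prod_(y <- u) y) by apply: (sgprod (sgS E')) => y /uB /BS.
  have Sq : S' (\prod_(y <- u) f (g y)).
    by apply: (sgprod (sgS E')) => y /uB /BS /gP [h _]; apply: qf1.
  have h4 : H' (f x / f (\prod_(x <- map g u) x)).
    rewrite big_map.
    apply: (Htrans E' Su hu); apply: (Htrans E' Sq h3); by apply: (Hsym E'); exact: h1.
  have h5 := qdiv Sx Sp.
  apply: (qf3 (sgD (sgS E) Sx Sp)).1.
  have Sfd : S' (f x / f (\prod_(x <- map g u) x)) by apply: (sgD (sgS E')); apply: qf1.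
  exact: HmulC Sfd h5 h4.
move=> y1 y2 B1 B2 e.
have [_ h1] := gP _ (BS _ B1); have [_ h2] := gP _ (BS _ B2).
rewrite e in h1.
have h := Htrans E' (qf1 (proj1 (gP _ (BS _ B2)))) h1 (Hsym E' h2).
apply: perm_eq1; apply: (uniq_repr E' qB) => //.
- by move=> x; rewrite inE => /eqP ->.
- by move=> x; rewrite inE => /eqP ->.
by rewrite !big_seq1.
Qed.

End Qiso.

Section Adjust.
Variables (F : fieldType) (S H : F -> Prop).
Hypothesis E : esp S H.

Definition Hv (v : F) x := H x \/ H (x * v).

Lemma esp_Hv v : S v -> esp S (Hv v).
Proof.
move=> Sv; have v0 := S0 E Sv.
have sH := sgH E; have sS := sgS E.
have Hvv : H (v * v) by apply: (Hsq E).
split => //.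
- split.
  + by left; apply: (sg1 sH).
  + move=> x y [hx|hx] [hy|hy].
    * by left; apply: (sgM sH).
    * by right; rewrite -mulrA; apply: (sgM sH).
    * by right; rewrite mulrAC; apply: (sgM sH).
    * left; have := sgD sH (sgM sH hx hy) Hvv.
      have -> : x * v * (y * v) / (v * v) = x * y by field.
      done.
  + move=> x [hx|hx]; first by left; apply: (sgV sH).
    right; have := sgM sH (sgV sH hx) Hvv.
    have x0 : x != 0 by have := sg0 sH hx; rewrite mulf_eq0 negb_or => /andP[].
    have -> : (x * v)^-1 * (v * v) = x^-1 * v by field; apply/andP.
    done.
  + move=> x [hx|hx]; first exact: (sg0 sH).
    by have := sg0 sH hx; rewrite mulf_eq0 negb_or => /andP[].
- move=> x [hx|hx]; first exact: (HS E).
  have := sgD sS (HS E hx) Sv; by rewrite mulfK.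
- by move=> x Sx; left; apply: (Hsq E).
Qed.

Lemma HsymM x y : S y -> H (x * y) -> H (x / y).
Proof.
move=> Sy h; have := sgD (sgH E) h (Hsq E Sy).
by rewrite invfM mulrA mulfK // (S0 E).
Qed.

Lemma exchange B v : qbasis S H B -> S v -> ~ H v ->
  exists b0, B b0 /\ qbasis S (Hv v) (fun x => B x /\ x != b0).
Proof.
move=> qB Sv nHv; have BS := qbasis_sub qB.
have [s [us sB hs]] := span_uniq E qB Sv.
case: s us sB hs => [|b0 s'] us sB hs.
  by exfalso; apply: nHv; move: hs; rewrite big_nil divr1.
set s := b0 :: s' in us sB hs.
have b0s : b0 \in s by rewrite inE eqxx.
have Ss : S (\prod_(x <- s) x) by apply: (Sprod E BS).
exists b0; split; first exact: sB.
split; first by move=> x [/BS].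
split.
  move=> t ut tB [ht|ht].
    by apply: (qbasis_indep qB ut) => // x /tB [].
  have St : S (\prod_(x <- t) x) by apply: (Sprod E BS) => x /tB [].
  exfalso.
  have h1 : H (\prod_(x <- t) x / \prod_(x <- s) x).
    apply: (HsymM Ss).
    have -> : \prod_(x <- t) x * \prod_(x <- s) x =
        (\prod_(x <- t) x * v) * (\prod_(x <- s) x / v).
      by have v0 := S0 E Sv; field.
    by apply: (sgM (sgH E)) => //; apply: (Hsym E).
  have := uniq_repr E qB ut us (fun x xt => proj1 (tB x xt)) sB h1.
  move=> /perm_mem /(_ b0); rewrite b0s => b0t.
  by case: (tB _ b0t) => _; rewrite eqxx.
move=> y Sy.
have [u [uu uB hu]] := span_uniq E qB Sy.
case b0u: (b0 \in u).
  exists (symd u s); split.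
    move=> x xs; split.
      by case/orP: (symd_mem xs) => [/uB|/sB].
    apply/eqP => xb; move: xs; rewrite xb /symd mem_cat !mem_filter b0u b0s.
    by [].
  right.
  have e := symd_prod (fun x => x) uu us.
  set I := \prod_(x <- [seq x <- u | x \in s]) x in e.
  set D := \prod_(x <- symd u s) x in e *.
  have SI : S I by apply: (Sprod E BS) => x; rewrite mem_filter => /andP[_ /uB].
  have I0 : I ^+ 2 != 0 by rewrite expf_neq0 // (S0 E).
  have SU : S (\prod_(x <- u) x) by apply: (Sprod E BS).
  have -> : y / D * v = (y / \prod_(x <- u) x) * (v / \prod_(x <- s) x) * I ^+ 2.
    have -> : D = (\prod_(x <- u) x * \prod_(x <- s) x) / I ^+ 2.
      by rewrite e mulrC mulKf.
    have u0 := S0 E SU; have s0 := S0 E Ss; have i0 := S0 E SI.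
    by field; rewrite u0 s0 i0.
  apply: (sgM (sgH E)); last exact: (Hsq2 E).
  by apply: (sgM (sgH E)) => //; apply: (Hsym E).
exists u; split; last by left.
move=> x xu; split; first exact: uB.
by apply/eqP => xb; move: xu; rewrite xb b0u.
Qed.

Lemma addvb B v : qbasis S (Hv v) B -> S v -> ~ H v ->
  qbasis S H (fun x => B x \/ x = v) /\ ~ B v.
Proof.
move=> qB Sv nHv; have BS := qbasis_sub qB; have v0 := S0 E Sv.
have nBv : ~ B v.
  move=> Bv; have h : [:: v] = [::].
    apply: (qbasis_indep qB) => //; first by move=> x; rewrite inE => /eqP ->.
    by rewrite big_seq1; right; apply: (Hsq E).
  by [].
split => //.
split; first by move=> x [/BS //|->].
split.
  move=> t ut tB ht.
  case vt: (v \in t); last first.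
    apply: (qbasis_indep qB ut) => [x xt|]; last by left.
    by case: (tB x xt) => // xv; move: xt; rewrite xv vt.
  have rB : forall x, x \in rem v t -> B x.
    move=> x; rewrite (mem_rem_uniq _ ut) => /andP[xv xt].
    by case: (tB x xt) => // /eqP; rewrite (negbTE xv).
  move: ht; rewrite (perm_big _ (perm_to_rem vt)) big_cons => ht.
  have r0 : rem v t = [::].
    by apply: (qbasis_indep qB (rem_uniq _ ut) rB); right; rewrite mulrC.
  by exfalso; apply: nHv; move: ht; rewrite r0 big_nil; change (H (v * 1) -> H v); rewrite mulr1.
move=> y Sy; case: qB => _ [_ sp]; have [u [uB [hu|hu]]] := sp y Sy.
  by exists u; split => // x /uB; left.
exists (v :: u); split.
  by move=> x; rewrite inE => /orP[/eqP ->|/uB]; [right|left].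
have Su : S (\prod_(x <- u) x) by apply: (Sprod E BS).
have := sgD (sgH E) hu (Hsq E Sv).
have -> : y / \prod_(x <- u) x * v / (v * v) = y / \prod_(x <- v :: u) x.
  by rewrite big_cons; have u0 := S0 E Su; field; rewrite v0 u0.
done.
Qed.

End Adjust.

Lemma stack (F : fieldType) (S M H : F -> Prop) B1 B2 :
  esp S M -> esp M H -> qbasis M H B1 -> qbasis S M B2 ->
  qbasis S H (fun x => B1 x \/ B2 x).
Proof.
move=> ESM EMH q1 q2.
have B1S : forall x, B1 x -> S x by move=> x /(qbasis_sub q1) /(HS ESM).
have B2S := qbasis_sub q2.
split; first by move=> x [/B1S|/B2S].
split.
  move=> t ut tB ht.
  pose p x := boolp.asbool (B2 x).
  have t1B : forall x, x \in [seq x <- t | ~~ p x] -> B1 x.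
    move=> x; rewrite mem_filter => /andP[/boolp.asboolPn nb xt].
    by case: (tB x xt).
  have t2B : forall x, x \in [seq x <- t | p x] -> B2 x.
    by move=> x; rewrite mem_filter => /andP[/boolp.asboolP].
  have e : \prod_(x <- t) x = \prod_(x <- [seq x <- t | p x]) x * \prod_(x <- [seq x <- t | ~~ p x]) x.
    by rewrite !big_filter; exact: (bigID p).
  have M1 : M (\prod_(x <- [seq x <- t | ~~ p x]) x).
    by apply: (sgprod (sgS EMH)) => x /t1B /(qbasis_sub q1).
  have M2 : M (\prod_(x <- [seq x <- t | p x]) x).
    have := sgD (sgS EMH) (HS EMH ht) M1.
    by rewrite e mulfK // (S0 EMH).
  have t20 := qbasis_indep q2 (filter_uniq _ ut) t2B M2.
  apply: (qbasis_indep q1 ut) => // x xt.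
  case: (tB x xt) => // b2.
  have : x \in [seq x <- t | p x] by rewrite mem_filter xt andbT; apply/boolp.asboolP.
  by rewrite t20.
move=> y Sy.
case: q2 => _ [_ sp2]; have [u2 [u2B hu2]] := sp2 y Sy.
case: q1 => _ [_ sp1]; have [u1 [u1B hu1]] := sp1 _ hu2.
exists (u1 ++ u2); split.
  by move=> x; rewrite mem_cat => /orP[/u1B|/u2B]; [left|right].
by rewrite big_cat /= invfM mulrA mulrAC.
Qed.


Definition pbij (A1 A2 : Type) (P1 : A1 -> Prop) (P2 : A2 -> Prop) (g : A1 -> A2) :=
  [/\ (forall x, P1 x -> P2 (g x)),
      (forall x y, P1 x -> P1 y -> g x = g y -> x = y) &
      (forall y, P2 y -> exists x, P1 x /\ g x = y)].

Section L3.
Variables (F1 F2 : fieldType) (S1 H1 : F1 -> Prop) (S2 H2 : F2 -> Prop).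
Hypotheses (E1 : esp S1 H1) (E2 : esp S2 H2).

Lemma basis_iso B1 B2 g : qbasis S1 H1 B1 -> qbasis S2 H2 B2 -> pbij B1 B2 g ->
  exists phi, qiso S1 H1 S2 H2 phi /\ forall b, B1 b -> H2 (phi b / g b).
Proof.
move=> q1 q2 [gB ginj gsurj].
have B1S := qbasis_sub q1; have B2S := qbasis_sub q2.
pose P x s := [/\ uniq s, (forall y, y \in s -> B1 y) & H1 (x / \prod_(y <- s) y)].
pose rep x := epsilon (inhabits [::]) (P x).
have repP : forall x, S1 x -> P x (rep x).
  move=> x Sx; apply: (epsilon_spec (inhabits [::]) (P x)).
  by have [t [ut tB ht]] := span_uniq E1 q1 Sx; exists t.
pose phi x := \prod_(b <- rep x) g b.
have Sg : forall s : seq F1, (forall y, y \in s -> B1 y) -> S2 (\prod_(b <- s) g b).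
  by move=> s sB; apply: (sgprod (sgS E2)) => y /sB /gB /B2S.
have Sr : forall x, S1 x -> S1 (\prod_(y <- rep x) y).
  by move=> x /repP [_ rB _]; apply: (Sprod E1 B1S).
have ginjs : forall s : seq F1, (forall y, y \in s -> B1 y) -> {in s &, injective g}.
  by move=> s sB x y xs ys e; exact: (ginj x y (sB _ xs) (sB _ ys) e).
have phi_rep : forall x (s : seq F1), S1 x -> uniq s -> (forall y, y \in s -> B1 y) ->
    H1 (x / \prod_(y <- s) y) -> phi x = \prod_(b <- s) g b.
  move=> x s Sx us sB hs; case: (repP _ Sx) => ur rB hr.
  apply: perm_big; apply: (uniq_repr E1 q1) => //.
  apply: (Htrans E1 Sx) hs; exact: (Hsym E1).
exists phi; split; last first.
  move=> b Bb; rewrite (phi_rep b [:: b]) //.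
  - rewrite big_seq1 divff; first exact: (sg1 (sgH E2)).
    exact: (S0 E2 (B2S _ (gB _ Bb))).
  - exact: B1S.
  - by move=> y; rewrite inE => /eqP ->.
  by rewrite big_seq1; apply: (Hrefl E1); apply: B1S.
split.
- by move=> x /repP [_ rB _]; apply: Sg.
- move=> x y Sx Sy.
  have [ux uxB hx] := repP _ Sx; have [uy uyB hy] := repP _ Sy.
  have Sxy : S1 (x * y) by apply: (sgM (sgS E1)).
  set rx := rep x in ux uxB hx *; set ry := rep y in uy uyB hy *.
  have SI : forall h : F1 -> F2, (forall b, B1 b -> S2 (h b)) ->
      S2 (\prod_(b <- [seq z <- rx | z \in ry]) h b).
    by move=> h hS; apply: (sgprod (sgS E2)) => z; rewrite mem_filter => /andP[_ /uxB /hS].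
  have DB : forall z, z \in symd rx ry -> B1 z by move=> z /symd_mem /orP[/uxB|/uyB].
  rewrite (phi_rep (x * y) (symd rx ry)) //; last 2 first.
  + exact: symd_uniq.
  + have e := symd_prod (fun z => z) ux uy.
    have SI1 : S1 (\prod_(b <- [seq z <- rx | z \in ry]) b).
      by apply: (sgprod (sgS E1)) => z; rewrite mem_filter => /andP[_ /uxB /B1S].
    have -> : \prod_(z <- symd rx ry) z =
        (\prod_(z <- rx) z * \prod_(z <- ry) z) / (\prod_(b <- [seq z <- rx | z \in ry]) b) ^+ 2.
      by rewrite e mulrC mulKf // expf_neq0 // (S0 E1).
    have Srx : S1 (\prod_(z <- rx) z) by apply: (Sprod E1 B1S).
    have Sry : S1 (\prod_(z <- ry) z) by apply: (Sprod E1 B1S).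
    have a0 := S0 E1 Srx; have b0 := S0 E1 Sry; have c0 := S0 E1 SI1.
    have -> : x * y / (\prod_(z <- rx) z * \prod_(z <- ry) z /
        (\prod_(b <- [seq z <- rx | z \in ry]) b) ^+ 2) =
        (x / \prod_(z <- rx) z) * (y / \prod_(z <- ry) z) *
        (\prod_(b <- [seq z <- rx | z \in ry]) b) ^+ 2.
      by field; rewrite a0 b0 c0.
    apply: (sgM (sgH E1)); last exact: (Hsq2 E1).
    by apply: (sgM (sgH E1)).
  rewrite /phi -/rx -/ry (symd_prod g ux uy).
  have SI2 := SI g (fun b Bb => B2S _ (gB _ Bb)).
  set I := \prod_(b <- [seq z <- rx | z \in ry]) g b.
  have SD : S2 (\prod_(b <- symd rx ry) g b) by apply: Sg.
  have -> : \prod_(b <- symd rx ry) g b / (I ^+ 2 * \prod_(b <- symd rx ry) g b) = (I ^+ 2)^-1.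
    by have d0 := S0 E2 SD; have i0 := S0 E2 SI2; field; rewrite d0 i0.
  by apply: (sgV (sgH E2)); apply: (Hsq2 E2).
- move=> x Sx; split.
    move=> h; have [ux uxB hx] := repP _ Sx.
    have e : rep x = [::].
      suff e0 : map g (rep x) = [::] by move: e0; case: (rep x).
      apply: (qbasis_indep q2).
      + by rewrite (map_inj_in_uniq (ginjs _ uxB)).
      + by move=> z /mapP[w /uxB /gB ? ->].
      by rewrite big_map.
    by move: hx; rewrite e big_nil divr1.
  move=> hx; have [ux uxB hr] := repP _ Sx.
  have e : perm_eq (rep x) [::].
    apply: (uniq_repr E1 q1) => //; rewrite big_nil divr1.
    have := sgD (sgH E1) hx hr.
    by rewrite invf_div mulrC divfK ?(S0 E1).
  by rewrite /phi (perm_big _ e) big_nil; apply: (sg1 (sgH E2)).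
move=> y Sy; have [t [ut tB ht]] := span_uniq E2 q2 Sy.
have [u [uB tu]] : exists u, (forall x, x \in u -> B1 x) /\ t = map g u.
  apply: seq_img => z /tB /gsurj [w [Bw <-]]; by exists w.
have uu : uniq u by move: ut; rewrite tu => /map_uniq.
have Su : S1 (\prod_(z <- u) z) by apply: (Sprod E1 B1S).
exists (\prod_(z <- u) z); split => //.
rewrite (phi_rep _ u) //; first by move: ht; rewrite tu big_map.
by apply: (Hrefl E1).
Qed.

End L3.

Definition tiso (A B : Type) := exists f : A -> B, bijective f.

Lemma inj_surj_tiso (A B : Type) (h : A -> B) :
  injective h -> (forall y, exists x, h x = y) -> tiso A B.
Proof.
move=> hi hs.
pose g y := proj1_sig (constructive_indefinite_description _ (hs y)).
have hg : cancel g h by move=> y; rewrite /g; case: constructive_indefinite_description.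
exists h; exists g => // x; apply: hi; exact: hg.
Qed.

Lemma tiso_refl A : tiso A A. Proof. by exists id; exists id. Qed.
Lemma tiso_sym A B : tiso A B -> tiso B A.
Proof. by move=> [f [g fg gf]]; exists g; exists f. Qed.
Lemma tiso_trans A B C : tiso A B -> tiso B C -> tiso A C.
Proof. by move=> [f bf] [g bg]; exists (g \o f); apply: bij_comp. Qed.

Lemma tiso_sum A A' B B' : tiso A A' -> tiso B B' -> tiso (A + B) (A' + B').
Proof.
move=> [f [f' ff' f'f]] [g [g' gg' g'g]].
exists (fun s => match s with inl a => inl (f a) | inr b => inr (g b) end).
exists (fun s => match s with inl a => inl (f' a) | inr b => inr (g' b) end).
  by case=> [a|b]; rewrite ?ff' ?gg'.
by case=> [a|b]; rewrite ?f'f ?g'g.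
Qed.

Lemma tiso_sumC A B : tiso (A + B) (B + A).
Proof.
exists (fun s => match s with inl a => inr a | inr b => inl b end).
by exists (fun s => match s with inl a => inr a | inr b => inl b end); case.
Qed.

Lemma tiso_sumA A B C : tiso ((A + B) + C) (A + (B + C)).
Proof.
exists (fun s => match s with inl (inl a) => inl a | inl (inr b) => inr (inl b)
                           | inr c => inr (inr c) end).
exists (fun s => match s with inl a => inl (inl a) | inr (inl b) => inl (inr b)
                           | inr (inr c) => inr c end).
  by case=> [[]|].
by case=> [|[]].
Qed.

Lemma I0_elim (A : Type) (i : 'I_0) : A.
Proof. by case: i. Qed.

Lemma tiso_I0 A : tiso ('I_0 + A) A.
Proof.
apply: (@inj_surj_tiso _ _ (fun s => match s with inl i => I0_elim A i | inr a => a end)).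
  by case=> [[]//|a] [[]//|b] /= ->.
by move=> y; exists (inr y).
Qed.

Lemma tiso_I2 A : tiso ('I_2 + A) ('I_1 + ('I_1 + A)).
Proof.
pose h (s : 'I_1 + ('I_1 + A)) : 'I_2 + A :=
  match s with inl _ => inl ord0 | inr (inl _) => inl ord_max | inr (inr a) => inr a end.
apply: tiso_sym; apply: (@inj_surj_tiso _ _ h).
  case=> [i|[i|a]] [j|[j|b]] //=; rewrite ?(ord1 i) ?(ord1 j) //.
  by case=> ->.
case=> [[[|[|m]] Hm]|a].
- by exists (inl ord0); congr inl; apply: val_inj.
- by exists (inr (inl ord0)); congr inl; apply: val_inj.
- by [].
by exists (inr (inr a)).
Qed.

Lemma tiso_cancel1 A B : tiso ('I_1 + A) ('I_1 + B) -> tiso A B.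
Proof.
move=> [f [f' ff' f'f]].
have fi : injective f by apply: can_inj ff'.
have f'i : injective f' by apply: can_inj f'f.
pose P (X Y : Type) (k : 'I_1 + X -> 'I_1 + Y) (a : X) (b : Y) :=
  k (inr a) = inr b \/ (k (inr a) = inl ord0 /\ k (inl ord0) = inr b).
have ex : forall (X Y : Type) (k : 'I_1 + X -> 'I_1 + Y), injective k ->
    forall a, exists b, P X Y k a b.
  move=> X Y k ki a; case e: (k (inr a)) => [i|b]; last by exists b; left.
  rewrite (ord1 i) in e.
  case e2: (k (inl ord0)) => [j|b]; last by exists b; right.
  by rewrite (ord1 j) -e in e2; have := ki _ _ e2.
have un : forall (X Y : Type) (k : 'I_1 + X -> 'I_1 + Y) a b1 b2,
    P X Y k a b1 -> P X Y k a b2 -> b1 = b2.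
  by move=> X Y k a b1 b2 [e1|[e1 e1']] [e2|[e2 e2']]; congruence.
have tr : forall a b, P A B f a b -> P B A f' b a.
  move=> a b [e|[e e']].
    by left; rewrite -e ff'.
  by right; split; [rewrite -e' ff' | rewrite -e ff'].
have tr' : forall b a, P B A f' b a -> P A B f a b.
  move=> b a [e|[e e']].
    by left; rewrite -e f'f.
  by right; split; [rewrite -e' f'f | rewrite -e f'f].
pose g a := proj1_sig (constructive_indefinite_description _ (ex _ _ f fi a)).
have gP : forall a, P A B f a (g a).
  by move=> a; rewrite /g; case: constructive_indefinite_description.
apply: (@inj_surj_tiso _ _ g).
  move=> a1 a2 e.
  have h1 := tr _ _ (gP a1); have h2 := tr _ _ (gP a2).
  rewrite e in h1; exact: un _ _ _ _ _ _ h1 h2.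
move=> b; have [a Pa] := ex _ _ f' f'i b.
exists a; apply: (un _ _ _ _ _ _ (gP a)); exact: tr'.
Qed.

Lemma sig_eq (A : Type) (P : A -> Prop) (x y : {a | P a}) : proj1_sig x = proj1_sig y -> x = y.
Proof. case: x => a pa; case: y => b pb /= e; subst b; f_equal; apply: proof_irrelevance. Qed.

Lemma pbij_tiso (A1 A2 : Type) (P1 : A1 -> Prop) (P2 : A2 -> Prop) g :
  pbij P1 P2 g -> tiso {x | P1 x} {y | P2 y}.
Proof.
move=> [gB gi gs].
apply: (@inj_surj_tiso _ _ (fun x : {x | P1 x} => exist P2 (g (proj1_sig x)) (gB _ (proj2_sig x)))).
  move=> [x px] [y py] /(f_equal (@proj1_sig _ _)) /= e.
  by apply: sig_eq => /=; apply: gi.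
move=> [y py]; have [x [px e]] := gs y py.
by exists (exist _ x px); apply: sig_eq.
Qed.

Lemma tiso_pbij (A1 A2 : Type) (a2 : A2) (P1 : A1 -> Prop) (P2 : A2 -> Prop) :
  tiso {x | P1 x} {y | P2 y} -> exists g, pbij P1 P2 g.
Proof.
move=> [f [f' ff' f'f]].
pose g x := match excluded_middle_informative (P1 x) with
            | left p => proj1_sig (f (exist _ x p)) | right _ => a2 end.
have gE : forall x (p : P1 x), g x = proj1_sig (f (exist _ x p)).
  move=> x p; rewrite /g; case: excluded_middle_informative => // p'.
  by rewrite (proof_irrelevance _ p p').
exists g; split.
- by move=> x p; rewrite (gE x p); apply: proj2_sig.
- move=> x y px py; rewrite (gE x px) (gE y py) => e.
  have := f_equal f' (sig_eq e); rewrite !ff'.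
  by move=> /(f_equal (@proj1_sig _ _)).
move=> y py; exists (proj1_sig (f' (exist _ y py))); split; first exact: proj2_sig.
rewrite (gE _ (proj2_sig (f' (exist _ y py)))).
have -> : exist P1 (proj1_sig (f' (exist P2 y py))) (proj2_sig (f' (exist P2 y py))) =
    f' (exist _ y py) by case: (f' _).
by rewrite f'f.
Qed.

Lemma tiso_rm (A : eqType) (P : A -> Prop) b0 : P b0 ->
  tiso {x | P x} ('I_1 + {x | P x /\ x != b0}).
Proof.
move=> pb; apply: tiso_sym.
pose h (s : 'I_1 + {x | P x /\ x != b0}) : {x | P x} :=
  match s with inl _ => exist P b0 pb | inr (exist x p) => exist P x (proj1 p) end.
apply: (@inj_surj_tiso _ _ h).
  case=> [i|[x [px nx]]] [j|[y [py ny]]] /= e.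
  - by rewrite (ord1 i) (ord1 j).
  - by have /= yb := f_equal (@proj1_sig _ _) e; exfalso; move: (ny); rewrite -yb eqxx.
  - by have /= yb := f_equal (@proj1_sig _ _) e; exfalso; move: (nx); rewrite yb eqxx.
  by congr inr; apply: sig_eq; move: (f_equal (@proj1_sig _ _) e).
move=> [x px]; case: (eqVneq x b0) => [e|ne].
  by exists (inl ord0); apply: sig_eq => /=.
by exists (inr (exist _ x (conj px ne))); apply: sig_eq.
Qed.

Lemma tiso_add (A : Type) (P : A -> Prop) v : ~ P v ->
  tiso ('I_1 + {x | P x}) {x | P x \/ x = v}.
Proof.
move=> nP.
pose h (s : 'I_1 + {x | P x}) : {x | P x \/ x = v} :=
  match s with inl _ => exist _ v (or_intror erefl) | inr (exist x p) => exist _ x (or_introl p) end.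
apply: (@inj_surj_tiso _ _ h).
  case=> [i|[x px]] [j|[y py]] /= e.
  - by rewrite (ord1 i) (ord1 j).
  - by have /= yb := f_equal (@proj1_sig _ _) e; exfalso; apply: nP; rewrite yb.
  - by have /= yb := f_equal (@proj1_sig _ _) e; exfalso; apply: nP; rewrite -yb.
  by congr inr; apply: sig_eq; move: (f_equal (@proj1_sig _ _) e).
move=> [x [px|e]].
  by exists (inr (exist _ x px)); apply: sig_eq.
by exists (inl ord0); apply: sig_eq => /=.
Qed.

Lemma pbij_img (A1 A2 : Type) (P : A1 -> Prop) (g : A1 -> A2) :
  (forall x y, P x -> P y -> g x = g y -> x = y) -> pbij P (img g P) g.
Proof.
move=> gi; split => //.
- by move=> x px; exists x.
by move=> y [x [px ->]]; exists x.
Qed.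

Lemma pbij_union (A1 A2 : Type) (P1 P2 : A1 -> Prop) (Q1 Q2 : A2 -> Prop) g1 g2 :
  pbij P1 Q1 g1 -> pbij P2 Q2 g2 -> (forall x, P1 x -> ~ P2 x) -> (forall y, Q1 y -> ~ Q2 y) ->
  pbij (fun x => P1 x \/ P2 x) (fun y => Q1 y \/ Q2 y)
       (fun x => if boolp.asbool (P1 x) then g1 x else g2 x).
Proof.
move=> [m1 i1 s1] [m2 i2 s2] dP dQ.
have gE1 : forall x, P1 x -> (if boolp.asbool (P1 x) then g1 x else g2 x) = g1 x.
  by move=> x p; rewrite (boolp.asboolT p).
have gE2 : forall x, P2 x -> (if boolp.asbool (P1 x) then g1 x else g2 x) = g2 x.
  by move=> x p; rewrite (boolp.asboolF (fun q => dP _ q p)).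
split.
- by move=> x [p|p]; [rewrite gE1 //; left; apply: m1 | rewrite gE2 //; right; apply: m2].
- move=> x y [px|px] [py|py].
  + by rewrite gE1 // gE1 //; apply: i1.
  + by rewrite gE1 // gE2 // => e; exfalso; apply: (dQ _ (m1 _ px)); rewrite e; apply: m2.
  + by rewrite gE2 // gE1 // => e; exfalso; apply: (dQ _ (m1 _ py)); rewrite -e; apply: m2.
  + by rewrite gE2 // gE2 //; apply: i2.
move=> y [qy|qy].
  by have [x [px <-]] := s1 y qy; exists x; split; [left | rewrite gE1].
by have [x [px <-]] := s2 y qy; exists x; split; [right | rewrite gE2].
Qed.

Lemma pbij_comp (A1 A2 A3 : Type) (P1 : A1 -> Prop) (P2 : A2 -> Prop) (P3 : A3 -> Prop) f g :
  pbij P1 P2 f -> pbij P2 P3 g -> pbij P1 P3 (fun x => g (f x)).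
Proof.
move=> [m1 i1 s1] [m2 i2 s2]; split.
- by move=> x /m1 /m2.
- by move=> x y px py /(i2 _ _ (m1 _ px) (m1 _ py)) /(i1 _ _ px py).
move=> z /s2 [y [py <-]]; have [x [px <-]] := s1 y py; by exists x.
Qed.

Lemma pbij_inv (A1 A2 : Type) (a1 : A1) (P1 : A1 -> Prop) (P2 : A2 -> Prop) f :
  pbij P1 P2 f -> exists g, pbij P2 P1 g /\ forall x, P1 x -> g (f x) = x.
Proof.
move=> [m1 i1 s1].
pose g y := epsilon (inhabits a1) (fun x => P1 x /\ f x = y).
have gP : forall y, P2 y -> P1 (g y) /\ f (g y) = y.
  by move=> y py; apply: (epsilon_spec (inhabits a1) (fun x => P1 x /\ f x = y)); apply: s1.
have gf : forall x, P1 x -> g (f x) = x.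
  by move=> x px; have [pg e] := gP _ (m1 _ px); apply: i1.
exists g; split => //; split.
- by move=> y /gP [].
- by move=> y z /gP [_ e1] /gP [_ e2] e; rewrite -e1 -e2 e.
by move=> x px; exists (f x); split; [apply: m1 | apply: gf].
Qed.

Lemma tiso_Isuc n A : tiso ('I_n.+1 + A) ('I_1 + ('I_n + A)).
Proof.
pose h (s : 'I_1 + ('I_n + A)) : 'I_n.+1 + A :=
  match s with inl _ => inl ord0 | inr (inl j) => inl (lift ord0 j) | inr (inr a) => inr a end.
apply: tiso_sym; apply: (@inj_surj_tiso _ _ h).
  case=> [i|[i|x]] [j|[j|y]] //=; rewrite ?(ord1 i) ?(ord1 j) //.
  - by move=> [e]; congr (inr (inl _)); apply: val_inj; move: e; rewrite !add0n.
  - by case=> ->.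
case=> [i|x]; last by exists (inr (inr x)).
case: (unliftP ord0 i) => [j ->|->].
  by exists (inr (inl j)).
by exists (inl ord0).
Qed.

Lemma tiso_cancel n A B : tiso ('I_n + A) ('I_n + B) -> tiso A B.
Proof.
elim: n => [|n IH] h.
  by apply: tiso_trans (tiso_sym (tiso_I0 A)) (tiso_trans h (tiso_I0 B)).
apply: IH; apply: tiso_cancel1.
apply: tiso_trans (tiso_sym (tiso_Isuc n A)) (tiso_trans h (tiso_Isuc n B)).
Qed.

Lemma tiso_swap2 a b X Y1 Y2 Z :
  tiso X ('I_a + Y1) -> tiso Y1 Y2 -> tiso Z ('I_b + Y2) ->
  tiso ('I_b + X) ('I_a + Z).
Proof.
move=> hX hY hZ.
apply: tiso_trans (tiso_sum (tiso_refl _) hX) _.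
apply: tiso_trans (tiso_sym (tiso_sumA _ _ _)) _.
apply: tiso_trans (tiso_sum (tiso_sumC _ _) hY) _.
apply: tiso_trans (tiso_sumA _ _ _) _.
exact: tiso_sum (tiso_refl _) (tiso_sym hZ).
Qed.

Lemma tiso_unswap2 a b X Y1 Y2 Z :
  tiso X ('I_a + Y1) -> tiso Z ('I_b + Y2) -> tiso ('I_b + X) ('I_a + Z) ->
  tiso Y1 Y2.
Proof.
move=> hX hZ h.
apply: (@tiso_cancel b); apply: (@tiso_cancel a).
apply: tiso_trans (tiso_sym (tiso_sumA _ _ _)) _.
apply: tiso_trans (tiso_sum (tiso_sumC _ _) (tiso_refl _)) _.
apply: tiso_trans (tiso_sumA _ _ _) _.
apply: tiso_trans (tiso_sum (tiso_refl _) (tiso_sym hX)) _.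
apply: tiso_trans h _.
apply: tiso_trans (tiso_sum (tiso_refl _) hZ) _.
exact: tiso_refl.
Qed.

Section SqGen.
Variable L : fieldType.

Lemma sq_subgrp : subgrp (@squares_of L).
Proof.
split.
- by exists 1; rewrite oner_neq0 expr1n.
- move=> x y [u [u0 ->]] [v [v0 ->]]; exists (u * v); split; first by rewrite mulf_neq0.
  by rewrite exprMn.
- by move=> x [u [u0 ->]]; exists u^-1; rewrite invr_eq0 u0 exprVn.
by move=> x [u [u0 ->]]; rewrite expf_neq0.
Qed.

Lemma units_subgrp : subgrp (@units_of L).
Proof.
rewrite /units_of; split.
- exact: oner_neq0.
- by move=> x y x0 y0; rewrite mulf_neq0.
- by move=> x x0; rewrite invr_eq0.
by [].
Qed.

Lemma sq_mm (x : L) : x != 0 -> squares_of (x * x).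
Proof. by move=> x0; exists x; rewrite expr2. Qed.

Lemma esp_of (S H : L -> Prop) : subgrp S -> subgrp H -> (forall x, H x -> S x) ->
  (forall x, squares_of x -> H x) -> esp S H.
Proof.
move=> sS sH HS sqH; split => // x Sx; apply: sqH; apply: sq_mm; exact: (sg0 sS).
Qed.

Lemma sq_equivP (x y : L) : y != 0 -> (sq_equiv x y <-> squares_of (x / y)).
Proof.
move=> y0; split.
  by move=> [z [z0 ->]]; exists z; rewrite z0 mulrAC divff // mul1r.
move=> [z [z0 e]]; exists z; split => //; rewrite -e mulrC divfK //.
Qed.

End SqGen.

Section Quad.
Variables (F K : fieldType) (i : {rmorphism F -> K}) (a : F) (r : K) (s : {rmorphism K -> K}).
Hypotheses (h2 : (2%:R : F) != 0) (a0 : a != 0) (nsq : ~ squares_of a)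
  (qe : is_quad_ext i a r) (gg : is_gal_generator i s).
Set Default Proof Using "All".

Lemma ra : r ^+ 2 = i a. Proof. by case: qe. Qed.
Lemma uv x : exists u v, x = i u + i v * r. Proof. by case: qe. Qed.
Lemma sfix c : s (i c) = i c. Proof. by case: gg => _ [h _]. Qed.
Lemma sne : exists x, s x != x. Proof. by case: gg => _ []. Qed.
Lemma i0 c : (i c == 0) = (c == 0). Proof. exact: fmorph_eq0. Qed.
Lemma s0 x : (s x == 0) = (x == 0). Proof. exact: fmorph_eq0. Qed.
Lemma r0 : r != 0.
Proof. by apply/eqP => e; move: ra; rewrite e expr0n /= => /eqP; rewrite eq_sym i0 (negbTE a0). Qed.
Lemma K2 : (2%:R : K) != 0. Proof. by rewrite -(rmorph_nat i) i0. Qed.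

Lemma indep1 p q : i p + i q * r = 0 -> p = 0 /\ q = 0.
Proof.
move=> e; case: (eqVneq q 0) => [q0|q0].
  by move: e; rewrite q0 rmorph0 mul0r addr0 => /eqP; rewrite i0 => /eqP.
exfalso; apply: nsq.
have iq : i q != 0 by rewrite i0.
have er : r = i (- p / q).
  have e2 : i q * r = - i p by rewrite -[i q * r]add0r -(addNr (i p)) -addrA e addr0.
  by rewrite rmorphM rmorphN fmorphV -e2; field.
exists (- p / q); split.
  apply/eqP => e0; move: ra; rewrite er e0 rmorph0 expr0n /= => /eqP.
  by rewrite eq_sym i0 (negbTE a0).
by apply: (fmorph_inj i); rewrite -ra er rmorphXn.
Qed.

Lemma sr : s r = - r.
Proof.
have e : (s r - r) * (s r + r) = 0.
  by rewrite -subr_sqr -rmorphXn ra sfix subrr.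
move/eqP: e; rewrite mulf_eq0 => /orP[/eqP e|/eqP e].
  exfalso; have [x] := sne; have [u [v ->]] := uv x.
  by rewrite rmorphD rmorphM !sfix (subr0_eq e) eqxx.
by apply/eqP; rewrite -subr_eq0 opprK e.
Qed.

Lemma s_uv u v : s (i u + i v * r) = i u - i v * r.
Proof. by rewrite rmorphD rmorphM !sfix sr mulrN. Qed.

Lemma ss x : s (s x) = x.
Proof. by have [u [v ->]] := uv x; rewrite s_uv rmorphB rmorphM !sfix sr mulrN opprK. Qed.

Lemma fixP x : s x = x -> exists c, x = i c.
Proof.
have [u [v ->]] := uv x; rewrite s_uv => e.
exists u.
have : i 0 + i (2%:R * v) * r = 0.
  rewrite rmorph0 add0r rmorphM rmorph_nat.
  have : (i u + i v * r) - (i u - i v * r) = 0 by rewrite -e subrr.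
  by move=> <-; rewrite mulr_natl; ring.
move=> /indep1 [_] /eqP; rewrite mulf_eq0 (negbTE h2) /= => /eqP ->.
by rewrite rmorph0 mul0r addr0.
Qed.

Definition Nr x := x * s x.

Lemma sN x : s (Nr x) = Nr x. Proof. by rewrite /Nr rmorphM ss mulrC. Qed.
Lemma N_in x : exists c, Nr x = i c. Proof. exact: fixP (sN x). Qed.
Lemma NM x y : Nr (x * y) = Nr x * Nr y. Proof. by rewrite /Nr rmorphM mulrACA. Qed.
Lemma N0 x : (Nr x == 0) = (x == 0). Proof. by rewrite /Nr mulf_eq0 s0 orbb. Qed.

Lemma sq_i c y : y != 0 -> i c = y ^+ 2 -> squares_of c \/ squares_of (c * a).
Proof.
move=> y0; have [u [v ey]] := uv y => e.
have : i (c - (u ^+ 2 + a * v ^+ 2)) + i (- (2%:R * u * v)) * r = 0.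
  rewrite !rmorphB !rmorphD !rmorphN !rmorphM !rmorph_nat e ey -ra.
  ring.
move=> /indep1 [/eqP e1 /eqP]; rewrite oppr_eq0 -mulrA mulf_eq0 (negbTE h2) /= mulf_eq0.
move: e1; rewrite subr_eq0 => /eqP ec.
case/orP => /eqP z.
  right; exists (a * v); split.
    rewrite mulf_neq0 //; apply/eqP => v0; move: y0; rewrite ey z v0 !rmorph0 mul0r addr0.
    by rewrite eqxx.
  by rewrite ec z; ring.
left; exists u; split.
  by apply/eqP => u0; move: y0; rewrite ey z u0 !rmorph0 mul0r addr0 eqxx.
by rewrite ec z; ring.
Qed.

Lemma h90 y : y * s y = 1 -> exists x, x != 0 /\ y = s x / x.
Proof.
move=> e; case: (eqVneq y (-1)) => [->|yn].
  by exists r; rewrite r0 sr mulNr divff ?r0.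
have sy0 : 1 + s y != 0.
  apply/eqP => h; move/eqP: yn; apply.
  have : s y = -1 by rewrite -[s y]add0r -(addNr 1) -addrA h addr0.
  by move=> /(congr1 s); rewrite ss rmorphN rmorph1.
exists (1 + s y); split => //.
rewrite rmorphD rmorph1 ss.
by apply: (mulIf sy0); rewrite divfK // mulrDr mulr1 e addrC.
Qed.

Definition Nm := norms_of i s.
Definition Nb (x : K) := exists c, Nm c /\ squares_of (x / i c).
Definition Fix (x : K) := x != 0 /\ squares_of (s x / x).
Definition Fb (x : K) := exists c, c != 0 /\ squares_of (x / i c).

Lemma Nm_ne0 c : Nm c -> c != 0.
Proof.
move=> [x [x0 e]]; rewrite -i0 e mulf_neq0 // s0 //.
Qed.

Lemma Nm_sub : subgrp Nm.
Proof.
split.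
- by exists 1; split; [exact: oner_neq0 | rewrite !rmorph1 mulr1].
- move=> c d [x [x0 ex]] [y [y0 ey]]; exists (x * y); split; first by rewrite mulf_neq0.
  by rewrite rmorphM ex ey rmorphM mulrACA.
- move=> c [x [x0 ex]]; exists x^-1; split; first by rewrite invr_eq0.
  by rewrite fmorphV ex fmorphV invfM.
exact: Nm_ne0.
Qed.

Lemma Fsq_Nm c : squares_of c -> Nm c.
Proof.
move=> [y [y0 ->]]; exists (i y); split; first by rewrite i0.
by rewrite rmorphXn sfix expr2.
Qed.

Lemma esp_Fu_Nm : esp (@units_of F) Nm.
Proof. apply: esp_of => //; [exact: units_subgrp|exact: Nm_sub|exact: Nm_ne0|exact: Fsq_Nm]. Qed.

Lemma esp_Nm_Fsq : esp Nm (@squares_of F).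
Proof. apply: esp_of => //; [exact: Nm_sub|exact: sq_subgrp|exact: Fsq_Nm]. Qed.

Lemma Nb_sub : subgrp Nb.
Proof.
have sq := @sq_subgrp K.
split.
- exists 1; split; first exact: (sg1 Nm_sub).
  by rewrite rmorph1 divr1; apply: (sg1 sq).
- move=> x y [c [Nc hc]] [d [Nd hd]]; exists (c * d); split; first exact: (sgM Nm_sub).
  by rewrite rmorphM invfM mulrACA; apply: (sgM sq).
- move=> x [c [Nc hc]]; exists c^-1; split; first exact: (sgV Nm_sub).
  by rewrite fmorphV -invfM; apply: (sgV sq).
move=> x [c [Nc hc]]; have := sg0 sq hc.
by rewrite mulf_eq0 negb_or => /andP[].
Qed.

Lemma Fix_sub : subgrp Fix.
Proof.
have sq := @sq_subgrp K.
split.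
- split; [exact: oner_neq0 | by rewrite rmorph1 divr1; apply: (sg1 sq)].
- move=> x y [x0 hx] [y0 hy]; split; first by rewrite mulf_neq0.
  by rewrite rmorphM invfM mulrACA; apply: (sgM sq).
- move=> x [x0 hx]; split; first by rewrite invr_eq0.
  have sx0 : s x != 0 by rewrite s0.
  have -> : s x^-1 / x^-1 = (s x / x)^-1 by rewrite fmorphV; field; rewrite x0 sx0 oner_neq0.
  by apply: (sgV sq).
by move=> x [].
Qed.

Lemma Sq_Nb x : squares_of x -> Nb x.
Proof. by move=> h; exists 1; split; [exact: (sg1 Nm_sub) | rewrite rmorph1 divr1]. Qed.

Lemma Nb_Fix x : Nb x -> Fix x.
Proof.
move=> [c [Nc [z [z0 e]]]].
have ic0 : i c != 0 by rewrite i0 Nm_ne0.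
have ex : x = i c * z ^+ 2 by rewrite -e mulrC divfK.
have x0 : x != 0 by rewrite ex mulf_neq0 // expf_neq0.
split => //; exists (s z / z); split; first by rewrite mulf_neq0 ?invr_eq0 ?s0.
by rewrite ex rmorphM sfix rmorphXn; field; rewrite ic0 z0.
Qed.

Lemma Nb_Fb x : Nb x -> Fb x.
Proof. by move=> [c [Nc h]]; exists c; split => //; apply: Nm_ne0. Qed.

Lemma Fb_Fix x : Fb x -> Fix x.
Proof.
move=> [c [c0 [z [z0 e]]]].
have ic0 : i c != 0 by rewrite i0.
have ex : x = i c * z ^+ 2 by rewrite -e mulrC divfK.
have x0 : x != 0 by rewrite ex mulf_neq0 // expf_neq0.
split => //; exists (s z / z); split; first by rewrite mulf_neq0 ?invr_eq0 ?s0.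
by rewrite ex rmorphM sfix rmorphXn; field; rewrite ic0 z0.
Qed.

Lemma esp_Tu_Sq : esp (@units_of K) (@squares_of K).
Proof. apply: esp_of => //; [exact: units_subgrp|exact: sq_subgrp|move=> x h; exact: (sg0 (@sq_subgrp K) h)]. Qed.
Lemma esp_Tu_Fix : esp (@units_of K) Fix.
Proof.
apply: esp_of => //; [exact: units_subgrp|exact: Fix_sub|by move=> x []|].
by move=> x /Sq_Nb /Nb_Fix.
Qed.
Lemma esp_Fix_Nb : esp Fix Nb.
Proof. by apply: esp_of => //; [exact: Fix_sub|exact: Nb_sub|exact: Nb_Fix|exact: Sq_Nb]. Qed.
Lemma esp_Nb_Sq : esp Nb (@squares_of K).
Proof. by apply: esp_of => //; [exact: Nb_sub|exact: sq_subgrp|exact: Sq_Nb]. Qed.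
Lemma esp_Fix_Sq : esp Fix (@squares_of K).
Proof. by apply: esp_of => //; [exact: Fix_sub|exact: sq_subgrp|move=> x /Sq_Nb /Nb_Fix]. Qed.

Lemma Sq_i c : c != 0 -> (squares_of (i c) <-> squares_of c \/ squares_of (c * a)).
Proof.
move=> c0; split; first by move=> [y [y0 e]]; apply: sq_i y0 e.
case=> [[u [u0 ->]]|[u [u0 e]]].
  by exists (i u); rewrite rmorphXn i0.
exists (i u / r); split; first by rewrite mulf_neq0 ?invr_eq0 ?i0 ?r0.
have -> : c = u ^+ 2 / a by rewrite -e mulfK.
by rewrite rmorphM rmorphXn fmorphV -ra; field; rewrite r0.
Qed.

Lemma Nb_i c : c != 0 -> (Nb (i c) <-> Nm c \/ Nm (c * a)).
Proof.
move=> c0; split.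
  move=> [d [Nd h]].
  have d0 := Nm_ne0 Nd.
  move: h; rewrite -fmorph_div => /(Sq_i _) [|/Fsq_Nm h|/Fsq_Nm h].
  - by rewrite mulf_neq0 ?invr_eq0.
  - by left; have := sgM Nm_sub h Nd; rewrite divfK.
  right; have := sgM Nm_sub h Nd.
  by rewrite mulrAC divfK.
case=> h.
  exists c; split => //; rewrite divff; first exact: (sg1 (@sq_subgrp K)).
  by rewrite i0.
exists (c * a); split => //.
rewrite rmorphM invfM mulrA divff ?i0 // mul1r -ra.
by apply: (sgV (@sq_subgrp K)); exists r; rewrite r0.
Qed.

Lemma Nm_a : Nm a <-> Nm (-1).
Proof.
have Na : Nm (- a).
  exists r; split; first exact: r0.
  by rewrite sr mulrN -expr2 ra rmorphN.
split => h.
  by have := sgD Nm_sub Na h; rewrite mulNr divff.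
by have := sgM Nm_sub Na h; rewrite mulrN1 opprK.
Qed.

Lemma Ups1 : Nm (-1) -> Upsilon i s = 1%N.
Proof. by move=> h; rewrite /Upsilon; case: excluded_middle_informative. Qed.
Lemma Ups0 : ~ Nm (-1) -> Upsilon i s = 0%N.
Proof. by move=> h; rewrite /Upsilon; case: excluded_middle_informative. Qed.

Lemma fixcore y t : y != 0 -> t != 0 -> s y / y = t ^+ 2 -> Nr t = 1 -> Fb y.
Proof.
move=> y0 t0 e Nt.
have [u [u0 eu]] := h90 Nt.
have su0 : s u != 0 by rewrite s0.
have [c ec] : exists c, y / u ^+ 2 = i c.
  apply: fixP.
  have esy : s y = y * t ^+ 2 by rewrite -e mulrC divfK.
  rewrite fmorph_div rmorphXn esy eu; field; by rewrite u0 su0.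
exists c; split.
  by rewrite -i0 -ec mulf_neq0 // invr_eq0 expf_neq0.
rewrite -ec; exists u; split => //; field; by rewrite u0 y0.
Qed.

Lemma Ntsq y t : y != 0 -> s y / y = t ^+ 2 -> Nr t = 1 \/ Nr t = -1.
Proof.
move=> y0 e.
have : Nr t ^+ 2 = 1.
  rewrite expr2 -NM -expr2 -e /Nr fmorph_div ss.
  have sy0 : s y != 0 by rewrite s0.
  by field; rewrite y0 sy0.
by move/eqP; rewrite sqrf_eq1 => /orP[/eqP|/eqP]; [left|right].
Qed.

Lemma Fix_Fb : ~ Nm (-1) -> forall y, Fix y -> Fb y.
Proof.
move=> nN y [y0 [t [t0 e]]].
case: (Ntsq y0 e) => h; first exact: fixcore y0 t0 e h.
exfalso; apply: nN; exists t; split => //; by rewrite rmorphN1 -h.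
Qed.

Lemma x0_ex : Nm (-1) -> exists x0,
  [/\ Fix x0, ~ Fb x0 & forall y, Fix y -> Fb y \/ Fb (y * x0)].
Proof.
move=> [z [z0 ez]].
have Nz : Nr z = -1 by rewrite /Nr -ez rmorphN1.
have Nz2 : Nr (z ^+ 2) = 1 by rewrite expr2 NM Nz mulrNN mulr1.
have [x0 [x00 ex0]] := h90 Nz2.
have Fx0 : Fix x0 by split => //; exists z; split => //; rewrite ex0.
exists x0; split => //.
  move=> [c [c0 [u [u0 eu]]]].
  have ic0 : i c != 0 by rewrite i0.
  have su0 : s u != 0 by rewrite s0.
  have ex : x0 = i c * u ^+ 2 by rewrite -eu mulrC divfK.
  have : (s u / u) ^+ 2 == z ^+ 2.
    by rewrite ex0 ex rmorphM sfix rmorphXn; apply/eqP; field; rewrite ic0 u0.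
  rewrite eqf_sqr => h.
  have N1 : Nr (s u / u) = 1 by rewrite /Nr fmorph_div ss; field; rewrite u0 su0.
  have : Nr (s u / u) = -1.
    case/orP: h => /eqP ->; first exact: Nz.
    by rewrite /Nr rmorphN mulrNN.
  rewrite N1 => /eqP; rewrite -subr_eq0 opprK.
  by rewrite (_ : 1 + 1 = 2%:R) // (negbTE K2).
move=> y [y0 [t [t0 e]]].
case: (Ntsq y0 e) => h; first by left; apply: fixcore y0 t0 e h.
right; apply: (@fixcore _ (t * z)).
- by rewrite mulf_neq0.
- by rewrite mulf_neq0.
- by rewrite rmorphM invfM mulrACA e -ex0 exprMn.
by rewrite NM h Nz mulrNN mulr1.
Qed.

Lemma Fix_i c : c != 0 -> Fix (i c).
Proof. by move=> c0; split; [rewrite i0 | rewrite sfix divff ?i0 //; exact: (sg1 (@sq_subgrp K))]. Qed.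

Lemma qi2 (H : K -> Prop) : subgrp H -> forall c d : F, c != 0 -> d != 0 -> H (i (c * d) / (i c * i d)).
Proof. by move=> sH c d c0 d0; rewrite rmorphM divff ?mulf_neq0 ?i0 //; apply: (sg1 sH). Qed.

Lemma qN : qiso (@units_of K) Fix Nb (@squares_of K) Nr.
Proof.
have sq := @sq_subgrp K.
split.
- move=> x x0; have [c ec] := N_in x; exists c; split.
    by exists x; split => //; rewrite -ec.
  by rewrite ec divff ?i0; [apply: (sg1 sq) | rewrite -i0 -ec N0].
- move=> x y x0 y0; rewrite NM divff; first exact: (sg1 sq).
  by rewrite mulf_neq0 // N0.
- move=> x x0; rewrite /units_of in x0.
  have e : Nr x = (x * x) * (s x / x) by rewrite /Nr; field.
  rewrite e; split.
    move=> h; split => //; have := sgD sq h (sq_mm x0).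
    by rewrite mulrC mulKf // mulf_neq0.
  by move=> [_ h]; apply: (sgM sq) => //; apply: sq_mm.
move=> y [c [[w [w0 ew]] h]]; exists w; split => //.
by rewrite /Nr -ew.
Qed.

Lemma qiD0 : ~ Nm (-1) -> qiso Nm (@squares_of F) Nb (@squares_of K) i.
Proof.
move=> nN; split.
- move=> c Nc; exists c; split => //.
  by rewrite divff ?i0 ?Nm_ne0 //; exact: (sg1 (@sq_subgrp K)).
- by move=> c d /Nm_ne0 c0 /Nm_ne0 d0; apply: qi2 => //; exact: sq_subgrp.
- move=> c Nc; rewrite (Sq_i (Nm_ne0 Nc)); split; last by left.
  case=> // /Fsq_Nm h; exfalso; apply: nN; apply/Nm_a.
  by have := sgD Nm_sub h Nc; rewrite mulrC mulKf ?Nm_ne0.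
by move=> y [c [Nc h]]; exists c.
Qed.

Lemma qiD1 : Nm (-1) -> qiso Nm (Hv (@squares_of F) a) Nb (@squares_of K) i.
Proof.
move=> hN; split.
- move=> c Nc; exists c; split => //.
  by rewrite divff ?i0 ?Nm_ne0 //; exact: (sg1 (@sq_subgrp K)).
- by move=> c d /Nm_ne0 c0 /Nm_ne0 d0; apply: qi2 => //; exact: sq_subgrp.
- by move=> c Nc; rewrite (Sq_i (Nm_ne0 Nc)).
by move=> y [c [Nc h]]; exists c.
Qed.

Lemma qiR0 : ~ Nm (-1) -> qiso (@units_of F) (Hv Nm a) Fix Nb i.
Proof.
move=> nN; split.
- by move=> c c0; apply: Fix_i.
- by move=> c d c0 d0; apply: qi2 => //; exact: Nb_sub.
- by move=> c c0; rewrite (Nb_i c0).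
move=> y /(Fix_Fb nN) [c [c0 h]]; exists c; split => //.
exact: Sq_Nb.
Qed.

Lemma Fb_mul x c : c != 0 -> Fb (i c * x) -> Fb x.
Proof.
move=> c0 [d [d0 h]]; exists (d / c); split; first by rewrite mulf_neq0 ?invr_eq0.
rewrite fmorph_div; move: h.
have ic0 : i c != 0 by rewrite i0.
have id0 : i d != 0 by rewrite i0.
have -> : i c * x / i d = x / (i d / i c) by field; rewrite ic0 id0.
done.
Qed.

Lemma qiR1 x0 : Nm (-1) -> Fix x0 -> ~ Fb x0 -> (forall y, Fix y -> Fb y \/ Fb (y * x0)) ->
  qiso (@units_of F) Nm Fix (Hv Nb x0) i.
Proof.
move=> hN Fx0 nF0 dec; split.
- by move=> c c0; apply: Fix_i.
- move=> c d c0 d0; left; apply: qi2 => //; exact: Nb_sub.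
- move=> c c0; split.
    case=> [/(Nb_i c0) [//|h]|/Nb_Fb h].
      by have := sgD Nm_sub h (proj2 Nm_a hN); rewrite mulfK.
    by exfalso; apply: nF0; apply: (Fb_mul c0).
  by move=> Nc; left; apply/(Nb_i c0); left.
move=> y /dec [[c [c0 h]]|[c [c0 h]]]; exists c; split => //.
  by left; apply: Sq_Nb.
by right; apply: Sq_Nb; rewrite mulrAC.
Qed.

Lemma notH_basis (L : fieldType) (S H B : L -> Prop) x : qbasis S H B -> B x -> ~ H x.
Proof.
move=> qB Bx hx.
have : [:: x] = [::].
  apply: (qbasis_indep qB) => //; first by move=> y; rewrite inE => /eqP ->.
  by rewrite big_seq1.
by [].
Qed.

Lemma JfromD D : qbasis Nm (@squares_of F) D ->
  exists J, qbasis Nb (@squares_of K) J /\ tiso {x | D x} ('I_(Upsilon i s) + {x | J x}).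
Proof.
move=> qD.
case: (classic (Nm (-1))) => hN.
  rewrite Ups1 //.
  have Na := proj2 Nm_a hN.
  have nsa : ~ squares_of a by [].
  have [b0 [Db0 qD']] := exchange esp_Nm_Fsq qD Na nsa.
  have [qJ inj] := tr_img (esp_Hv esp_Nm_Fsq Na) esp_Nb_Sq (qiD1 hN) qD'.
  exists (img i (fun x => D x /\ x != b0)); split => //.
  apply: tiso_trans (tiso_rm Db0) _.
  apply: tiso_sum (tiso_refl _) _.
  by apply: pbij_tiso; apply: pbij_img.
rewrite Ups0 //.
have [qJ inj] := tr_img esp_Nm_Fsq esp_Nb_Sq (qiD0 hN) qD.
exists (img i D); split => //.
apply: tiso_trans _ (tiso_sym (tiso_I0 _)).
by apply: pbij_tiso; apply: pbij_img.
Qed.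

Lemma DfromJ J : qbasis Nb (@squares_of K) J ->
  exists D, qbasis Nm (@squares_of F) D /\ tiso {x | D x} ('I_(Upsilon i s) + {x | J x}).
Proof.
move=> qJ.
case: (classic (Nm (-1))) => hN.
  rewrite Ups1 //.
  have Na := proj2 Nm_a hN.
  have [g [qD' ginj _]] := tr_pre (esp_Hv esp_Nm_Fsq Na) esp_Nb_Sq (qiD1 hN) qJ.
  have [qD nD] := addvb esp_Nm_Fsq qD' Na nsq.
  exists (fun x => img g J x \/ x = a); split => //.
  apply: tiso_trans (tiso_sym (tiso_add nD)) _.
  apply: tiso_sum (tiso_refl _) _.
  by apply: tiso_sym; apply: pbij_tiso; apply: pbij_img.
rewrite Ups0 //.
have [g [qD ginj _]] := tr_pre esp_Nm_Fsq esp_Nb_Sq (qiD0 hN) qJ.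
exists (img g J); split => //.
apply: tiso_trans _ (tiso_sym (tiso_I0 _)).
by apply: tiso_sym; apply: pbij_tiso; apply: pbij_img.
Qed.

Lemma RfromB B : qbasis (@units_of F) Nm B ->
  exists R, qbasis Fix Nb R /\ tiso ('I_(2 * Upsilon i s) + {x | B x}) ('I_1 + {x | R x}).
Proof.
move=> qB.
case: (classic (Nm (-1))) => hN.
  rewrite Ups1 //.
  have [x0 [Fx0 nF0 dec]] := x0_ex hN.
  have [qR' inj] := tr_img esp_Fu_Nm (esp_Hv esp_Fix_Nb Fx0) (qiR1 hN Fx0 nF0 dec) qB.
  have nNb0 : ~ Nb x0 by move=> /Nb_Fb.
  have [qR nR] := addvb esp_Fix_Nb qR' Fx0 nNb0.
  exists (fun x => img i B x \/ x = x0); split => //.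
  apply: tiso_trans (tiso_I2 _) _.
  apply: tiso_sum (tiso_refl _) _.
  apply: tiso_trans _ (tiso_add nR).
  apply: tiso_sum (tiso_refl _) _.
  by apply: pbij_tiso; apply: pbij_img.
rewrite Ups0 //.
have nNa : ~ Nm a by move=> /Nm_a.
have [b0 [Bb0 qB']] := exchange esp_Fu_Nm qB (a0 : units_of a) nNa.
have [qR inj] := tr_img (esp_Hv esp_Fu_Nm (a0 : units_of a)) esp_Fix_Nb (qiR0 hN) qB'.
exists (img i (fun x => B x /\ x != b0)); split => //.
apply: tiso_trans (tiso_I0 _) _.
apply: tiso_trans (tiso_rm Bb0) _.
apply: tiso_sum (tiso_refl _) _.
by apply: pbij_tiso; apply: pbij_img.
Qed.

Lemma BfromR R : qbasis Fix Nb R ->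
  exists B, qbasis (@units_of F) Nm B /\ tiso ('I_(2 * Upsilon i s) + {x | B x}) ('I_1 + {x | R x}).
Proof.
move=> qR.
case: (classic (Nm (-1))) => hN.
  rewrite Ups1 //.
  have [x0 [Fx0 nF0 dec]] := x0_ex hN.
  have nNb0 : ~ Nb x0 by move=> /Nb_Fb.
  have [r0' [Rr0 qR']] := exchange esp_Fix_Nb qR Fx0 nNb0.
  have [g [qB ginj _]] := tr_pre esp_Fu_Nm (esp_Hv esp_Fix_Nb Fx0) (qiR1 hN Fx0 nF0 dec) qR'.
  exists (img g (fun x => R x /\ x != r0')); split => //.
  apply: tiso_trans (tiso_I2 _) _.
  apply: tiso_sum (tiso_refl _) _.
  apply: tiso_trans _ (tiso_sym (tiso_rm Rr0)).
  apply: tiso_sum (tiso_refl _) _.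
  by apply: tiso_sym; apply: pbij_tiso; apply: pbij_img.
rewrite Ups0 //.
have nNa : ~ Nm a by move=> /Nm_a.
have [g [qB' ginj _]] := tr_pre (esp_Hv esp_Fu_Nm (a0 : units_of a)) esp_Fix_Nb (qiR0 hN) qR.
have [qB nB] := addvb esp_Fu_Nm qB' (a0 : units_of a) nNa.
exists (fun x => img g R x \/ x = a); split => //.
apply: tiso_trans (tiso_I0 _) _.
apply: tiso_trans (tiso_sym (tiso_add nB)) _.
apply: tiso_sum (tiso_refl _) _.
by apply: tiso_sym; apply: pbij_tiso; apply: pbij_img.
Qed.

Lemma structure J R : qbasis Nb (@squares_of K) J -> qbasis Fix Nb R ->
  exists w : K -> K,
  [/\ qbasis (@units_of K) (@squares_of K) (fun x => (J x \/ R x) \/ img w J x),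
      (forall y, J y -> w y != 0 /\ squares_of (y / Nr (w y))),
      (forall y z, J y -> J z -> w y = w z -> y = z),
      (forall x, J x \/ R x -> Fix x) &
      ((forall x, J x \/ R x -> ~ img w J x) /\
      (forall x, J x -> ~ R x))].
Proof.
move=> qJ qR.
have qJR := stack esp_Fix_Nb esp_Nb_Sq qJ qR.
have [w [qW winj wP]] := tr_pre esp_Tu_Fix esp_Nb_Sq qN qJ.
have JRF : forall x, J x \/ R x -> Fix x.
  by move=> x [/(qbasis_sub qJ) /Nb_Fix|/(qbasis_sub qR)].
exists w; split => //.
- exact: stack esp_Tu_Fix esp_Fix_Sq qJR qW.
split.
  move=> x /JRF Fx Wx; exact: notH_basis qW Wx Fx.
move=> x /(qbasis_sub qJ) Nx Rx; exact: notH_basis qR Rx Nx.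
Qed.

End Quad.


Lemma esp_units (L : fieldType) : esp (@units_of L) (@squares_of L).
Proof.
apply: esp_of => //; [exact: units_subgrp|exact: sq_subgrp|].
move=> x h; exact: (sg0 (@sq_subgrp L) h).
Qed.

Lemma s_sq (L : fieldType) (s : {rmorphism L -> L}) x : squares_of x -> squares_of (s x).
Proof. by move=> [y [y0 ->]]; exists (s y); rewrite rmorphXn fmorph_eq0. Qed.

Lemma s_cong (L : fieldType) (s : {rmorphism L -> L}) x y :
  squares_of (x / y) -> squares_of (s x / s y).
Proof. by move=> h; rewrite -fmorph_div; apply: s_sq. Qed.

Section Eqv.
Variables (K1 K2 : fieldType) (s1 : {rmorphism K1 -> K1}) (s2 : {rmorphism K2 -> K2}) (phi : K1 -> K2).
Hypothesis qp : qiso (@units_of K1) (@squares_of K1) (@units_of K2) (@squares_of K2) phi.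

Let E1 := esp_units K1.
Let E2 := esp_units K2.

Lemma eqv_basis B : qbasis (@units_of K1) (@squares_of K1) B ->
  (forall b, B b -> squares_of (phi (s1 b) / s2 (phi b))) ->
  forall x, x != 0 -> squares_of (phi (s1 x) / s2 (phi x)).
Proof.
move=> qB hB x x0.
have BS := qbasis_sub qB.
case: (qB) => _ [_ sp]; have [u [uB hu]] := sp x x0.
have Su : units_of (\prod_(b <- u) b) by apply: (Sprod E1 BS).
have Sx : units_of x := x0.
have S1 : forall y : K1, units_of y -> units_of (s1 y) by move=> y; rewrite /units_of fmorph_eq0.
have S2 : forall y : K2, units_of y -> units_of (s2 y) by move=> y; rewrite /units_of fmorph_eq0.
have Pm : forall y, units_of y -> units_of (phi y) by move=> y; apply: (qf1 qp).
have Su1 : forall y, y \in map s1 u -> units_of y by move=> y /mapP[b /uB /BS ? ->]; apply: S1.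
have Sp1 : units_of (\prod_(y <- map s1 u) y) by apply: (sgprod (sgS E1)).
have ha : squares_of (s1 x / \prod_(y <- map s1 u) y).
  by rewrite big_map -rmorph_prod; apply: s_cong.
have hb := qcong E1 E2 qp (S1 _ Sx) Sp1 ha.
have hc := qprod E1 E2 qp Su1.
rewrite !big_map in hc; rewrite big_map in hb.
have hd : squares_of (\prod_(b <- u) phi (s1 b) / \prod_(b <- u) s2 (phi b)).
  by apply: (Hprod_cong (sgH E2)) => b /uB; apply: hB.
rewrite -rmorph_prod in hd.
have Sbu : forall b, b \in u -> units_of b by move=> b /uB /BS.
have hf := qprod E1 E2 qp Sbu.
have hg := qcong E1 E2 qp Su Sx (Hsym E1 hu).
have Spu : units_of (\prod_(b <- u) phi b) by apply: (sgprod (sgS E2)) => b /Sbu /Pm.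
have Sp1' := Sp1; rewrite big_map in Sp1'.
apply: (Htrans E2 _ hb); first exact: Pm.
apply: (Htrans E2 _ hc).
  by apply: (sgprod (sgS E2)) => b /Sbu /S1 /Pm.
apply: (Htrans E2 _ hd); first exact: S2.
apply: s_cong.
apply: (Htrans E2 (Pm _ Su) (Hsym E2 hf)).
exact: hg.
Qed.

Lemma Tiso_of : (forall x, x != 0 -> squares_of (phi (s1 x) / s2 (phi x))) -> T_iso s1 s2.
Proof.
move=> eqv; exists phi.
have P0 : forall x, x != 0 -> phi x != 0 by move=> x; apply: (qf1 qp).
split => //; split.
  move=> x y x0 y0; apply/sq_equivP; first by rewrite mulf_neq0 ?P0.
  exact: (qf2 qp).
split.
  move=> x x0; apply/sq_equivP; first by rewrite fmorph_eq0 P0.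
  exact: eqv.
split.
  move=> x x0 /sq_equivP; rewrite oner_neq0 divr1 => /(_ isT) h.
  apply/sq_equivP; rewrite ?oner_neq0 // divr1.
  exact: (proj1 (qf3 qp x0) h).
move=> y y0; have [x [x0 h]] := qf4 qp y0.
exists x; split => //; apply/sq_equivP => //.
by rewrite -invf_div; apply: (sgV (@sq_subgrp K2)).
Qed.

End Eqv.

Lemma of_Tiso (K1 K2 : fieldType) (s1 : {rmorphism K1 -> K1}) (s2 : {rmorphism K2 -> K2}) :
  T_iso s1 s2 -> exists phi,
  qiso (@units_of K1) (@squares_of K1) (@units_of K2) (@squares_of K2) phi /\
  (forall x, x != 0 -> squares_of (phi (s1 x) / s2 (phi x))).
Proof.
move=> [phi [p0 [pm [ps [pi psurj]]]]]; exists phi.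
split; last first.
  by move=> x x0; apply/sq_equivP; [rewrite fmorph_eq0 p0 | apply: ps].
split.
- exact: p0.
- by move=> x y x0 y0; apply/sq_equivP; [rewrite mulf_neq0 ?p0 | apply: pm].
- move=> x x0; split.
    move=> h; have : sq_equiv (phi x) 1 by apply/sq_equivP; rewrite ?oner_neq0 ?divr1.
    by move/(pi _ x0)/sq_equivP; rewrite oner_neq0 divr1 => /(_ isT).
  move=> [z [z0 ez]].
  have := pm z z (z0) (z0); move/sq_equivP; rewrite mulf_neq0 ?p0 // => /(_ isT) h.
  rewrite ez expr2.
  have := sgM (@sq_subgrp K2) h (sq_mm (p0 _ z0)).
  by rewrite divfK // mulf_neq0 ?p0.
move=> y y0; have [x [x0 h]] := psurj y y0.
exists x; split => //; move/sq_equivP: h => /(_ y0) h.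
by rewrite -invf_div; apply: (sgV (@sq_subgrp K2)).
Qed.

Lemma Nr_cong (L : fieldType) (s : {rmorphism L -> L}) x y :
  squares_of (x / y) -> squares_of (Nr s x / Nr s y).
Proof.
move=> h; have := sgM (@sq_subgrp L) h (s_cong s h).
by rewrite /Nr invfM mulrACA.
Qed.

Lemma sw (L : fieldType) (s : {rmorphism L -> L}) (w y : L) :
  w != 0 -> squares_of (y / Nr s w) -> squares_of (s w / (y * w)).
Proof.
move=> w0 h.
have sw0 : s w != 0 by rewrite fmorph_eq0.
have y0 : y != 0 by have := sg0 (@sq_subgrp L) h; rewrite mulf_eq0 negb_or => /andP[].
have -> : s w / (y * w) = (y / Nr s w)^-1 * (w^-1 * w^-1).
  by rewrite /Nr; field; rewrite w0 sw0 y0.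
apply: (sgM (@sq_subgrp L)); first exact: (sgV (@sq_subgrp L)).
by apply: sq_mm; rewrite invr_eq0.
Qed.

Section Main.
Variables (F1 K1 F2 K2 : fieldType) (i1 : {rmorphism F1 -> K1}) (i2 : {rmorphism F2 -> K2})
  (a1 : F1) (a2 : F2) (r1 : K1) (r2 : K2)
  (s1 : {rmorphism K1 -> K1}) (s2 : {rmorphism K2 -> K2}).
Hypotheses (h21 : (2%:R : F1) != 0) (h22 : (2%:R : F2) != 0)
  (a10 : a1 != 0) (nsq1 : ~ squares_of a1) (a20 : a2 != 0) (nsq2 : ~ squares_of a2)
  (qe1 : is_quad_ext i1 a1 r1) (qe2 : is_quad_ext i2 a2 r2)
  (gg1 : is_gal_generator i1 s1) (gg2 : is_gal_generator i2 s2).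

Let E1 := esp_units K1.
Let E2 := esp_units K2.
Let sq1 := @sq_subgrp K1.
Let sq2 := @sq_subgrp K2.

Lemma transport phi :
  qiso (@units_of K1) (@squares_of K1) (@units_of K2) (@squares_of K2) phi ->
  (forall x, x != 0 -> squares_of (phi (s1 x) / s2 (phi x))) ->
  qiso (Nb i1 s1) (@squares_of K1) (Nb i2 s2) (@squares_of K2) phi /\
  qiso (Fix s1) (Nb i1 s1) (Fix s2) (Nb i2 s2) phi.
Proof.
move=> qp eqv.
have qN1 := qN h21 a10 nsq1 qe1 gg1.
have qN2 := qN h22 a20 nsq2 qe2 gg2.
have Pm : forall x, units_of x -> units_of (phi x) by move=> x; apply: (qf1 qp).
have Nb10 : forall x, Nb i1 s1 x -> x != 0 by move=> x; apply: (sg0 (Nb_sub h21 a10 nsq1 qe1 gg1)).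
have Fix10 : forall x, Fix s1 x -> x != 0 by move=> x [].
have NrU : forall (L : fieldType) (s : {rmorphism L -> L}) x, x != 0 -> Nr s x != 0.
  by move=> L s x x0; rewrite /Nr mulf_neq0 // fmorph_eq0.
have P1 : forall x, x != 0 -> squares_of (phi (Nr s1 x) / Nr s2 (phi x)).
  move=> x x0; have sx0 : s1 x != 0 by rewrite fmorph_eq0.
  apply: (Htrans E2 _ (qf2 qp x0 sx0)); first by apply: (sgM (sgS E2)); apply: Pm.
  by rewrite /Nr; apply: (HMM E2); [apply: (Hrefl E2); apply: Pm | apply: eqv].
have Nbcl : forall y z, Nb i2 s2 y -> squares_of (z / y) -> Nb i2 s2 z.
  move=> y z Ny h; have := sgM (Nb_sub h22 a20 nsq2 qe2 gg2) (Sq_Nb h22 a20 nsq2 qe2 gg2 h) Ny.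
  by rewrite divfK // (sg0 (Nb_sub h22 a20 nsq2 qe2 gg2)).
have P2 : forall x, Nb i1 s1 x -> Nb i2 s2 (phi x).
  move=> x Nx; have x0 := Nb10 _ Nx.
  move: Nx => [c [[w [w0 ew]] h]].
  have hx : squares_of (phi x / phi (Nr s1 w)).
    by apply: (qcong E1 E2 qp) => //; [apply: NrU | rewrite /Nr -ew].
  apply: (Nbcl (Nr s2 (phi w))); first by apply: (qf1 qN2); apply: Pm.
  apply: (Htrans E2 _ hx); first by apply: Pm; apply: NrU.
  exact: P1.
have P3 : forall y, Nb i2 s2 y -> exists x, Nb i1 s1 x /\ squares_of (y / phi x).
  move=> y Ny; have [w2 [w20 h]] := qf4 qN2 Ny.
  have [w [w0 hw]] := qf4 qp w20.
  exists (Nr s1 w); split; first exact: (qf1 qN1).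
  apply: (Htrans E2 _ h); first exact: NrU.
  apply: (Htrans E2 _ (Nr_cong s2 hw)); first by apply: NrU; apply: Pm.
  by apply: (Hsym E2); apply: P1.
have P4 : forall x, Fix s1 x -> Fix s2 (phi x).
  move=> x [x0 hx]; split; first exact: Pm.
  have sx0 : s1 x != 0 by rewrite fmorph_eq0.
  have h1 := Hsym E2 (eqv _ x0).
  apply: (Htrans E2 _ h1); first exact: Pm.
  exact: (qcong E1 E2 qp).
have P5 : forall y, Fix s2 y -> exists x, Fix s1 x /\ squares_of (y / phi x).
  move=> y [y0 hy]; have [x [x0 h]] := qf4 qp y0.
  exists x; split => //; split => //.
  have sx0 : s1 x != 0 by rewrite fmorph_eq0.
  apply/(qf3 qp (sgD (sgS E1) sx0 x0)).
  have h1 : squares_of (phi (s1 x) / phi x).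
    apply: (Htrans E2 _ (eqv _ x0)); first by rewrite /units_of fmorph_eq0; apply: Pm.
    apply: (Htrans E2 _ (s_cong s2 (Hsym E2 h))); first by rewrite /units_of fmorph_eq0.
    apply: (Htrans E2 y0 hy); exact: h.
  have Sy : units_of (phi (s1 x) / phi x) by apply: (sgD (sgS E2)); apply: Pm.
  exact: (HmulC E2 Sy (qdiv E1 E2 qp sx0 x0) h1).
split.
  split.
  - exact: P2.
  - by move=> x y /Nb10 x0 /Nb10 y0; apply: (qf2 qp).
  - by move=> x /Nb10 x0; apply: (qf3 qp).
  exact: P3.
split.
- exact: P4.
- move=> x y /Fix10 x0 /Fix10 y0; apply: (Sq_Nb h22 a20 nsq2 qe2 gg2); exact: (qf2 qp).
- move=> x Fx; have x0 := Fix10 _ Fx; split; last exact: P2.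
  move=> /P3 [n [Nn h]]; have n0 := Nb10 _ Nn.
  have h2 := HmulC E2 (sgD (sgS E2) (Pm _ x0) (Pm _ n0)) (qdiv E1 E2 qp x0 n0) h.
  have h3 := proj1 (qf3 qp (sgD (sgS E1) x0 n0)) h2.
  have := sgM (Nb_sub h21 a10 nsq1 qe1 gg1) (Sq_Nb h21 a10 nsq1 qe1 gg1 h3) Nn.
  by rewrite divfK.
move=> y /P5 [x [Fx h]]; exists x; split => //; exact: (Sq_Nb h22 a20 nsq2 qe2 gg2).
Qed.

Let U1 := Upsilon i1 s1.
Let U2 := Upsilon i2 s2.

Lemma main_fwd : T_iso s1 s2 ->
  (dim_plus_eq (2 * Upsilon i1 s1)%N (@units_of F1) (norms_of i1 s1)
               (2 * Upsilon i2 s2)%N (@units_of F2) (norms_of i2 s2) /\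
   dim_plus_eq (Upsilon i2 s2) (norms_of i1 s1) (@squares_of F1)
               (Upsilon i1 s1) (norms_of i2 s2) (@squares_of F2)).
Proof.
move=> /of_Tiso [phi [qp eqv]].
have [qNb qFix] := transport qp eqv.
split.
  have [B1 qB1] := basis_exists (esp_Fu_Nm h21 a10 nsq1 qe1 gg1).
  have [R1 [qR1 t1]] := RfromB h21 a10 nsq1 qe1 gg1 qB1.
  have [qR2 inj] := tr_img (esp_Fix_Nb h21 a10 nsq1 qe1 gg1) (esp_Fix_Nb h22 a20 nsq2 qe2 gg2) qFix qR1.
  have [B2 [qB2 t2]] := BfromR h22 a20 nsq2 qe2 gg2 qR2.
  exists B1, B2; split => //; split => //.
  have T : tiso ('I_(2 * Upsilon i1 s1) + {x | B1 x}) ('I_(2 * Upsilon i2 s2) + {x | B2 x}).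
    apply: tiso_trans t1 _; apply: tiso_trans _ (tiso_sym t2).
    apply: tiso_sum (tiso_refl _) _.
    by apply: pbij_tiso; apply: pbij_img inj.
  exact: T.
have [D1 qD1] := basis_exists (esp_Nm_Fsq h21 a10 nsq1 qe1 gg1).
have [J1 [qJ1 t1]] := JfromD h21 a10 nsq1 qe1 gg1 qD1.
have [qJ2 inj] := tr_img (esp_Nb_Sq h21 a10 nsq1 qe1 gg1) (esp_Nb_Sq h22 a20 nsq2 qe2 gg2) qNb qJ1.
have [D2 [qD2 t2]] := DfromJ h22 a20 nsq2 qe2 gg2 qJ2.
exists D1, D2; split => //; split => //.
have T : tiso ('I_(Upsilon i2 s2) + {x | D1 x}) ('I_(Upsilon i1 s1) + {x | D2 x}).
  apply: tiso_swap2 t1 _ t2.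
  by apply: pbij_tiso; apply: pbij_img inj.
exact: T.
Qed.

Lemma main_bwd :
  (dim_plus_eq (2 * Upsilon i1 s1)%N (@units_of F1) (norms_of i1 s1)
               (2 * Upsilon i2 s2)%N (@units_of F2) (norms_of i2 s2) /\
   dim_plus_eq (Upsilon i2 s2) (norms_of i1 s1) (@squares_of F1)
               (Upsilon i1 s1) (norms_of i2 s2) (@squares_of F2)) -> T_iso s1 s2.
Proof.
move=> [[B1 [B2 [qB1 [qB2 tB]]]] [D1 [D2 [qD1 [qD2 tD]]]]].
have [R1 [qR1 tR1]] := RfromB h21 a10 nsq1 qe1 gg1 qB1.
have [R2 [qR2 tR2]] := RfromB h22 a20 nsq2 qe2 gg2 qB2.
have tR : tiso {x | R1 x} {x | R2 x}.
  apply: (@tiso_cancel 1); apply: tiso_trans (tiso_sym tR1) _.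
  exact: tiso_trans tB tR2.
have [J1 [qJ1 tJ1]] := JfromD h21 a10 nsq1 qe1 gg1 qD1.
have [J2 [qJ2 tJ2]] := JfromD h22 a20 nsq2 qe2 gg2 qD2.
have tJ : tiso {x | J1 x} {x | J2 x} := tiso_unswap2 tJ1 tJ2 tD.
have [bR pR] := tiso_pbij 0 tR.
have [bJ pJ] := tiso_pbij 0 tJ.
have [w1 [qBas1 w1P w1inj JRF1 [dW1 dJR1]]] := structure h21 a10 nsq1 qe1 gg1 qJ1 qR1.
have [w2 [qBas2 w2P w2inj JRF2 [dW2 dJR2]]] := structure h22 a20 nsq2 qe2 gg2 qJ2 qR2.
have pW1 := pbij_img w1inj.
have [w1' [pW1' w1'K]] := pbij_inv 0 pW1.
have pW2 := pbij_img w2inj.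
have pJR := pbij_union pJ pR dJR1 dJR2.
have pW := pbij_comp (pbij_comp pW1' pJ) pW2.
have pg := pbij_union pJR pW dW1 dW2.
set g := (fun x => if boolp.asbool (J1 x \/ R1 x) then _ else _) in pg.
have [phi [qp phib]] := basis_iso (esp_units K1) (esp_units K2) qBas1 qBas2 pg.
apply: (Tiso_of qp); apply: (eqv_basis qp qBas1) => b Bb.
have b0 : b != 0 := qbasis_sub qBas1 Bb.
have Pm : forall x, units_of x -> units_of (phi x) by move=> x; apply: (qf1 qp).
have gB : forall x, (J1 x \/ R1 x) \/ img w1 J1 x -> (J2 (g x) \/ R2 (g x)) \/ img w2 J2 (g x).
  by case: pg.
have gb0 : g b != 0 by apply: (qbasis_sub qBas2); apply: gB.
have hb := phib b Bb.
have e2 : squares_of (s2 (phi b) / s2 (g b)) by apply: s_cong.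
have s2g0 : units_of (s2 (g b)) by rewrite /units_of fmorph_eq0.
have s1b0 : units_of (s1 b) by rewrite /units_of fmorph_eq0.
have gE1 : forall x, J1 x \/ R1 x -> g x = if boolp.asbool (J1 x) then bJ x else bR x.
  by move=> x h; rewrite /g (boolp.asboolT h).
case: Bb => [JR|[y [Jy eb]]].
  have [_ Fb] := JRF1 _ JR.
  have gJR : J2 (g b) \/ R2 (g b).
    rewrite gE1 //; case: (pJR) => m _ _; exact: m.
  have [_ Fg] := JRF2 _ gJR.
  apply: (Htrans (esp_units K2) (Pm _ b0) (qcong (esp_units K1) (esp_units K2) qp s1b0 b0 Fb)).
  apply: (Htrans (esp_units K2) gb0 hb).
  apply: (Htrans (esp_units K2) s2g0 (Hsym (esp_units K2) Fg)).
  exact: (Hsym (esp_units K2) e2).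
have nJR : ~ (J1 b \/ R1 b) by move=> h; apply: (dW1 _ h); exists y.
have gEb : g b = w2 (bJ y).
  by rewrite /g (boolp.asboolF nJR) eb w1'K.
have y0' : units_of y by move: (Nb_Fix h21 a10 nsq1 qe1 gg1 (qbasis_sub qJ1 Jy)) => [].
have Jy' : J2 (bJ y) by case: pJ => m _ _; apply: m.
have gy : g y = bJ y.
  rewrite gE1; last by left.
  by rewrite (boolp.asboolT Jy).
have hy := phib y (or_introl (or_introl Jy)).
rewrite gy in hy.
rewrite gEb in hb gb0 e2 s2g0.
have [w20 hw2] := w2P _ Jy'.
have [w10 hw1] := w1P _ Jy.
have sw1 := sw w10 hw1.
have sw2 := sw w20 hw2.
rewrite -eb in sw1.
have yb0 : units_of (y * b) by apply: (sgM (sgS (esp_units K1))).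
have h1 := qcong (esp_units K1) (esp_units K2) qp s1b0 yb0 sw1.
have h2 := qf2 qp y0' b0.
have h3 : squares_of (phi y * phi b / (bJ y * w2 (bJ y))).
  by apply: (HMM (esp_units K2)).
have Jy'0 : units_of (bJ y) by move: (Nb_Fix h22 a20 nsq2 qe2 gg2 (qbasis_sub qJ2 Jy')) => [].
apply: (Htrans (esp_units K2) (Pm _ yb0) h1).
apply: (Htrans (esp_units K2) (sgM (sgS (esp_units K2)) (Pm _ y0') (Pm _ b0)) h2).
apply: (Htrans (esp_units K2) (sgM (sgS (esp_units K2)) Jy'0 w20) h3).
apply: (Htrans (esp_units K2) s2g0 (Hsym (esp_units K2) sw2)).
exact: (Hsym (esp_units K2) e2).
Qed.

End Main.

Theorem corollary3
  (F1 K1 F2 K2 : fieldType)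
  (i1 : {rmorphism F1 -> K1}) (i2 : {rmorphism F2 -> K2})
  (a1 : F1) (a2 : F2) (r1 : K1) (r2 : K2)
  (s1 : {rmorphism K1 -> K1}) (s2 : {rmorphism K2 -> K2}) :
  (2%:R : F1) != 0 -> (2%:R : F2) != 0 ->
  a1 != 0 -> ~ squares_of a1 -> a2 != 0 -> ~ squares_of a2 ->
  is_quad_ext i1 a1 r1 -> is_quad_ext i2 a2 r2 ->
  is_gal_generator i1 s1 -> is_gal_generator i2 s2 ->
  T_iso s1 s2 <->
  (dim_plus_eq (2 * Upsilon i1 s1)%N (@units_of F1) (norms_of i1 s1)
               (2 * Upsilon i2 s2)%N (@units_of F2) (norms_of i2 s2) /\
   dim_plus_eq (Upsilon i2 s2) (norms_of i1 s1) (@squares_of F1)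
               (Upsilon i1 s1) (norms_of i2 s2) (@squares_of F2)).
Proof.
move=> h21 h22 a10 nsq1 a20 nsq2 qe1 qe2 gg1 gg2; split.
  exact: main_fwd h21 h22 a10 nsq1 a20 nsq2 qe1 qe2 gg1 gg2.
exact: main_bwd h21 h22 a10 nsq1 a20 nsq2 qe1 qe2 gg1 gg2.
Qed.
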